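(* Let $1<p<\infty$, $\frac1p+\frac1q=1$, let $a,b$ be as in the context, and let $w=(w_n)_{n\ge0}$ be nonzero complex numbers with $$\sup_{n\ge0}\Big|\frac{w_na_n}{a_{n+1}}\Big|<\infty\quad\text{and}\quad\limsup_{n\to\infty}\Big|\frac{b_n}{a_{n+1}}\Big|<1 .$$ Identify $(\ell^p_{a,b})^*$ with $\ell^q(\mathbb{N}_0)$ via $L\mapsto(L(f_n))_{n\ge0}$. Then the following are equivalent: (i) $F_w^*$ is not hypercyclic on $(\ell^p_{a,b})^*$; (ii) for every $L\in(\ell^p_{a,b})^*$ (equivalently every $u\in\ell^q(\mathbb{N}_0)$) the sequence $\big((F_w^* )^\nu L\big)(f_n)=L(F_w^\nu f_n)$, i.e. the image of $u$ under the $\nu$-th power of the matrix of $F_w^*$ with respect to $\{f_n^*\}$, tends to $0$ in $\mathbb{C}^{\mathbb{N}_0}$ (coordinatewise) as $\nu\to\infty$; that is, $L(F_w^\nu f_n)\to0$ as $\nu\to\infty$ for every $n\ge0$.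
   Context: Let $a=(a_n)_{n\ge0}$, $b=(b_n)_{n\ge0}$ be sequences of nonzero complex numbers with $\limsup_{n\to\infty}(|a_n|+|b_n|)^{1/n}<\infty$, and let $R=1/\limsup_{n}(|a_n|+|b_n|)^{1/n}\in(0,\infty]$. For $n\ge0$ let $f_n(z)=(a_n+b_nz)z^n$. For $1\le p<\infty$, $\ell^p_{a,b}$ is the space of analytic functions on $\{|z|<R\}$ of the form $f=\sum_{n\ge0}\lambda_nf_n$ with $(\lambda_n)\in\ell^p(\mathbb{N}_0)$ (the series converges locally uniformly on $\{|z|<R\}$ and the $\lambda_n$ are uniquely determined by $f$), normed by $\|f\|=(\sum_n|\lambda_n|^p)^{1/p}$. $f_n^*$ are the coordinate functionals $f_n^*(\sum_j\lambda_jf_j)=\lambda_n$. The weighted forward shift is $F_w\big(\sum_{n\ge0}\mu_nz^n\big)=\sum_{n\ge0}\mu_nw_nz^{n+1}$ (bounded on $\ell^p_{a,b}$ under the hypotheses); $F_w^*$ is its adjoint. $\mathbb{C}^{\mathbb{N}_0}$ carries the topology of coordinatewise convergence. Hypercyclic means having a dense orbit. *)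

(* Defs.v *)
From Stdlib Require Import Reals.
From Coquelicot Require Import Coquelicot.

Open Scope C_scope.

(* |x|^r for x >= 0, with the convention 0^r = 0 (r > 0) *)
Definition rpow (x r : R) : R :=
  match Rlt_dec 0 x with left _ => Rpower x r | right _ => 0%R end.

Definition Cseries (s : nat -> C) : C :=
  (Series (fun k => Re (s k)), Series (fun k => Im (s k))).

Definition in_lq (q : R) (u : nat -> C) : Prop :=
  ex_series (fun n => rpow (Cmod (u n)) q).
Definition lq_norm (q : R) (u : nat -> C) : R :=
  rpow (Series (fun n => rpow (Cmod (u n)) q)) (/ q).

(* An element f = sum_n lam_n f_n of ell^p_{a,b}, f_n = (a_n + b_n z) z^n,
   is represented by its coordinate sequence lam.  Its Taylor coefficients: *)
Definition taylor (a b : nat -> C) (lam : nat -> C) (m : nat) : C :=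
  a m * lam m + match m with O => 0 | S m' => b m' * lam m' end.

Definition Fw_taylor (w : nat -> C) (mu : nat -> C) (m : nat) : C :=
  match m with O => 0 | S m' => w m' * mu m' end.

(* recover the (unique) coordinates lam from Taylor coefficients nu, i.e. the
   solution of nu_m = a_m lam_m + b_(m-1) lam_(m-1) *)
Fixpoint coord (a b : nat -> C) (nu : nat -> C) (m : nat) : C :=
  match m with
  | O => nu O / a O
  | S m' => (nu (S m') - b m' * coord a b nu m') / a (S m')
  end.

Definition Fw_coord (a b w : nat -> C) (lam : nat -> C) : nat -> C :=
  coord a b (Fw_taylor w (taylor a b lam)).

Definition unitvec (n : nat) : nat -> C :=
  fun k => if Nat.eqb k n then 1 else 0.

(* matrix of F_w^* w.r.t. {f_n^*}, acting on u = (L(f_k))_k in ell^q: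
   (F_w^* u)_n = L(F_w f_n) = sum_k u_k (F_w f_n)_k *)
Definition Fw_adj (a b w : nat -> C) (u : nat -> C) : nat -> C :=
  fun n => Cseries (fun k => u k * Fw_coord a b w (unitvec n) k).

Definition hypercyclic_lq (q : R) (T : (nat -> C) -> (nat -> C)) : Prop :=
  exists u, in_lq q u /\
    forall v, in_lq q v -> forall eps : R, (0 < eps)%R ->
      exists nu : nat, in_lq q (Nat.iter nu T u) /\
        (lq_norm q (fun n => (Nat.iter nu T u n - v n)%C) < eps)%R.

(* Main.v *)
Require Import Defs.
From Stdlib Require Import Reals Lra Lia ZArith FunctionalExtensionality Cantor IndefiniteDescription Classical.
From Coquelicot Require Import Coquelicot.
Open Scope R_scope.

Lemma rpow_ge0 x r : 0 <= rpow x r.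
Proof. unfold rpow; destruct (Rlt_dec 0 x). left; apply exp_pos. lra. Qed.

Lemma rpow_0 r : rpow 0 r = 0.
Proof. unfold rpow; destruct (Rlt_dec 0 0); lra. Qed.

Lemma rpow_pos x r : 0 < x -> 0 < rpow x r.
Proof. intros; unfold rpow; destruct (Rlt_dec 0 x). apply exp_pos. lra. Qed.

Lemma rpow_Rpower x r : 0 < x -> rpow x r = Rpower x r.
Proof. intros; unfold rpow; destruct (Rlt_dec 0 x); lra. Qed.

Lemma rpow_le x y r : 0 <= r -> 0 <= x <= y -> rpow x r <= rpow y r.
Proof.
  intros hr [hx hxy]. destruct hx as [hx|hx].
  - rewrite !rpow_Rpower by lra. apply Rle_Rpower_l; lra.
  - subst. rewrite rpow_0. apply rpow_ge0.
Qed.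

Lemma rpow_lt x y r : 0 < r -> 0 <= x < y -> rpow x r < rpow y r.
Proof.
  intros hr [hx hxy]. destruct hx as [hx|hx].
  - rewrite !rpow_Rpower by lra. apply Rlt_Rpower_l; lra.
  - subst. rewrite rpow_0. apply rpow_pos; lra.
Qed.

Lemma rpow_mult x y r : 0 <= x -> 0 <= y -> rpow (x * y) r = rpow x r * rpow y r.
Proof.
  intros hx hy. destruct hx as [hx|hx]; [|subst; rewrite Rmult_0_l, !rpow_0; ring].
  destruct hy as [hy|hy]; [|subst; rewrite Rmult_0_r, !rpow_0; ring].
  rewrite !rpow_Rpower by (try apply Rmult_lt_0_compat; lra).
  rewrite Rpower_mult_distr; auto.
Qed.

Lemma rpow_inv x r : r <> 0 -> 0 <= x -> rpow (rpow x r) (/ r) = x.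
Proof.
  intros hr hx. destruct hx as [hx|hx]; [|subst; rewrite !rpow_0; auto].
  rewrite (rpow_Rpower x) by lra. rewrite rpow_Rpower by (apply exp_pos).
  rewrite Rpower_mult. rewrite Rinv_r by auto. apply Rpower_1; auto.
Qed.

Lemma rpow_inv' x r : r <> 0 -> 0 <= x -> rpow (rpow x (/ r)) r = x.
Proof.
  intros hr hx. rewrite <- (Rinv_inv r) at 2. apply rpow_inv; auto.
  apply Rinv_neq_0_compat; auto.
Qed.

Lemma rpow_1 r : rpow 1 r = 1.
Proof. rewrite rpow_Rpower by lra. unfold Rpower. rewrite ln_1, Rmult_0_r. apply exp_0. Qed.

Lemma rpow_quasi x y q : 0 <= q ->
  rpow (Cmod (x + y)%C) q <= rpow 2 q * (rpow (Cmod x) q + rpow (Cmod y) q).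
Proof.
  intros hq.
  assert (h : Cmod (x + y)%C <= 2 * Rmax (Cmod x) (Cmod y)).
  { eapply Rle_trans. apply Cmod_triangle.
    pose proof (Rmax_l (Cmod x) (Cmod y)). pose proof (Rmax_r (Cmod x) (Cmod y)). lra. }
  eapply Rle_trans. apply rpow_le. auto. split. apply Cmod_ge_0. exact h.
  assert (0 <= Rmax (Cmod x) (Cmod y)) by (apply Rle_trans with (Cmod x); [apply Cmod_ge_0|apply Rmax_l]).
  rewrite rpow_mult by lra.
  apply Rmult_le_compat_l. apply rpow_ge0.
  pose proof (rpow_ge0 (Cmod x) q). pose proof (rpow_ge0 (Cmod y) q).
  unfold Rmax; destruct (Rle_dec (Cmod x) (Cmod y)); lra.
Qed.

Lemma is_series_R_iff (a : nat -> R) l : is_series a l <-> is_lim_seq (sum_n a) l.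
Proof. split; intro H; exact H. Qed.

Lemma series_pos_bounded (f : nat -> R) (B : R) :
  (forall n, 0 <= f n) -> (forall N, sum_n f N <= B) -> ex_series f /\ Series f <= B.
Proof.
  intros hpos hB.
  assert (hinc : forall n, sum_n f n <= sum_n f (S n)).
  { intro n. rewrite sum_Sn. simpl. change plus with Rplus. specialize (hpos (S n)). simpl. lra. }
  destruct (ex_finite_lim_seq_incr _ _ hinc hB) as [l hl].
  assert (hs : is_series f l) by (apply is_series_R_iff; auto).
  split. exists l; auto.
  rewrite (is_series_unique _ _ hs).
  assert (Rbar_le l B). { apply is_lim_seq_le with (sum_n f) (fun _ => B); auto. apply is_lim_seq_const. }
  simpl in H; auto.
Qed.

Definition Sq (q : R) (x : nat -> C) := Series (fun n => rpow (Cmod (x n)) q).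

Lemma Series_zero : Series (fun _ => 0) = 0.
Proof. transitivity (Series (fun n : nat => 0 * (fun _ => 0) n)). apply Series_ext; intros; simpl; ring.
  rewrite Series_scal_l. ring. Qed.

Lemma Series_nonneg (f : nat -> R) : (forall n, 0 <= f n) -> ex_series f -> 0 <= Series f.
Proof. intros h he. rewrite <- Series_zero. apply Series_le; auto. intro; split; [lra|auto]. Qed.

Lemma series_le_ex (f g : nat -> R) :
  (forall n, 0 <= f n <= g n) -> ex_series g -> ex_series f /\ Series f <= Series g.
Proof.
  intros h hg. split.
  - apply (ex_series_le f g); auto. intro n. change (norm (f n)) with (Rabs (f n)).
    destruct (h n). rewrite Rabs_pos_eq; lra.
  - apply Series_le; auto.
Qed.

Lemma exR_scal_l (a : nat -> R) c : ex_series a -> ex_series (fun n => c * a n).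
Proof. intro h. apply ex_series_ext with (fun n => a n * c). intro n; apply Rmult_comm. apply ex_series_scal_r; auto. Qed.

Lemma exR_plus (a b : nat -> R) : ex_series a -> ex_series b -> ex_series (fun n => a n + b n).
Proof. intros h1 h2. exact (ex_series_plus (V:=R_NormedModule) a b h1 h2). Qed.

Lemma Sq_nonneg q x : in_lq q x -> 0 <= Sq q x.
Proof. intro h. apply Series_nonneg; auto. intro; apply rpow_ge0. Qed.

Lemma lq_dom q (x y : nat -> C) c : 0 <= q -> 0 <= c ->
  (forall n, Cmod (x n) <= c * Cmod (y n)) -> in_lq q y ->
  in_lq q x /\ Sq q x <= rpow c q * Sq q y.
Proof.
  intros hq hc h hy. unfold Sq.
  rewrite <- Series_scal_l.
  apply series_le_ex.
  - intro n. split. apply rpow_ge0. rewrite <- rpow_mult by (auto; apply Cmod_ge_0).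
    apply rpow_le; auto. split; auto. apply Cmod_ge_0.
  - apply exR_scal_l. exact hy.
Qed.

Lemma lq_plus q (x y : nat -> C) : 0 <= q -> in_lq q x -> in_lq q y ->
  in_lq q (fun n => x n + y n)%C /\ Sq q (fun n => x n + y n)%C <= rpow 2 q * (Sq q x + Sq q y).
Proof.
  intros hq hx hy. unfold Sq.
  rewrite <- Series_plus by auto. rewrite <- Series_scal_l.
  apply series_le_ex.
  - intro n. split. apply rpow_ge0. apply rpow_quasi; auto.
  - apply exR_scal_l. apply exR_plus; auto.
Qed.

Lemma lq_opp q (x : nat -> C) : 0 <= q -> in_lq q x -> in_lq q (fun n => - x n)%C /\ Sq q (fun n => - x n)%C = Sq q x.
Proof.
  intros hq hx. unfold in_lq, Sq. split.
  - eapply ex_series_ext; [|exact hx]. intro n; simpl. rewrite Cmod_opp; auto.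
  - apply Series_ext. intro; rewrite Cmod_opp; auto.
Qed.

Lemma lq_minus q (x y : nat -> C) : 0 <= q -> in_lq q x -> in_lq q y ->
  in_lq q (fun n => x n - y n)%C /\ Sq q (fun n => x n - y n)%C <= rpow 2 q * (Sq q x + Sq q y).
Proof.
  intros hq hx hy. destruct (lq_opp q y hq hy) as [h1 h2].
  destruct (lq_plus q x _ hq hx h1) as [h3 h4]. rewrite h2 in h4. split; auto.
Qed.

Lemma lq_coord q (x : nat -> C) n : in_lq q x -> rpow (Cmod (x n)) q <= Sq q x.
Proof.
  intros hx. unfold Sq.
  set (f := fun k => if Nat.eqb k n then rpow (Cmod (x n)) q else 0).
  assert (hf : Series f = rpow (Cmod (x n)) q).
  { apply is_series_unique. apply is_series_R_iff.
    apply is_lim_seq_ext_loc with (fun _ => rpow (Cmod (x n)) q). 2: apply is_lim_seq_const.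
    exists n. intros N hN. induction N.
    - unfold f. rewrite sum_O. assert (n = 0%nat) by lia. subst. reflexivity.
    - destruct (Nat.eq_dec n (S N)).
      + subst. rewrite sum_Sn. rewrite sum_n_ext_loc with (b := fun _ => 0).
        * rewrite sum_n_const. unfold f. rewrite Nat.eqb_refl. change plus with Rplus. simpl. ring.
        * intros k hk. unfold f. destruct (Nat.eqb_spec k (S N)); [lia|auto].
      + rewrite sum_Sn, <- IHN by lia. unfold f. destruct (Nat.eqb_spec (S N) n); [lia|].
        change plus with Rplus. simpl. ring. }
  rewrite <- hf. apply Series_le; auto. intro k. unfold f. destruct (Nat.eqb_spec k n).
  subst; split; [apply rpow_ge0|lra]. split; [lra|apply rpow_ge0].
Qed.

Lemma lq_to0 q (x : nat -> C) : 0 < q -> in_lq q x ->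
  forall eps, 0 < eps -> exists N, forall n, (N <= n)%nat -> Cmod (x n) < eps.
Proof.
  intros hq hx eps he.
  pose proof (ex_series_lim_0 _ hx) as hl.
  destruct (hl (fun t => Rabs t < rpow eps q)) as [N hN].
  { exists (mkposreal _ (rpow_pos eps q he)). intros y hy. simpl in hy. unfold ball in hy; simpl in hy.
    unfold AbsRing_ball, abs, minus, plus, opp in hy; simpl in hy. rewrite Ropp_0, Rplus_0_r in hy. auto. }
  exists N. intros n hn. specialize (hN n hn). simpl in hN.
  rewrite Rabs_pos_eq in hN by apply rpow_ge0.
  destruct (Rlt_le_dec (Cmod (x n)) eps) as [h|h]; auto.
  exfalso. assert (rpow eps q <= rpow (Cmod (x n)) q). apply rpow_le; lra. lra.
Qed.

Lemma lq_norm_lt q (x : nat -> C) eps : 0 < q -> 0 < eps -> in_lq q x -> Sq q x < rpow eps q ->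
  lq_norm q x < eps.
Proof.
  intros hq he hx hs. unfold lq_norm. fold (Sq q x).
  rewrite <- (rpow_inv eps q) by lra.
  apply rpow_lt. apply Rinv_0_lt_compat; auto. split; auto. apply Sq_nonneg; auto.
Qed.

Lemma lq_norm_ge q (x : nat -> C) n : 0 < q -> in_lq q x -> Cmod (x n) <= lq_norm q x.
Proof.
  intros hq hx. unfold lq_norm. fold (Sq q x).
  rewrite <- (rpow_inv (Cmod (x n)) q) by (try lra; apply Cmod_ge_0).
  apply rpow_le. left; apply Rinv_0_lt_compat; auto. split. apply rpow_ge0. apply lq_coord; auto.
Qed.

Lemma lq_shift q (x : nat -> C) : 0 <= q -> in_lq q x -> in_lq q (fun n => x (S n)) /\ Sq q (fun n => x (S n)) <= Sq q x.
Proof.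
  intros hq hx. split.
  - apply (ex_series_incr_1 (V:=R_NormedModule)) in hx. exact hx.
  - unfold Sq. rewrite (Series_incr_1 (fun n => rpow (Cmod (x n)) q)) by auto.
    pose proof (rpow_ge0 (Cmod (x 0%nat)) q). lra.
Qed.

Definition beta (a b : nat -> C) (k : nat) : C :=
  match k with O => 0%C | S k' => (b k' / a k)%C end.
Definition Jt (a b : nat -> C) (y : nat -> C) (k : nat) : C :=
  (y k + beta a b (S k) * y (S k))%C.
Definition om (a w : nat -> C) (m : nat) : C := (w m * a m / a (S m))%C.
Definition Bw (a w : nat -> C) (y : nat -> C) (m : nat) : C := (om a w m * y (S m))%C.
Definition tends0 (y : nat -> C) : Prop :=
  forall eps, 0 < eps -> exists N, forall n, (N <= n)%nat -> Cmod (y n) < eps.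

Lemma beta_ev (a b : nat -> C) :
  Rbar_lt (LimSup_seq (fun n => Cmod (b n / a (S n)))) 1%R ->
  exists r, 0 <= r < 1 /\ exists K, forall k, (K <= k)%nat -> Cmod (beta a b k) <= r.
Proof.
  intros h. destruct (ex_LimSup_seq (fun n => Cmod (b n / a (S n)))) as [l hl].
  rewrite (is_LimSup_seq_unique _ _ hl) in h.
  destruct l as [l| |]; simpl in h, hl.
  - assert (he : 0 < (1 - l) / 2) by lra.
    destruct (hl (mkposreal _ he)) as [_ [N hN]]. simpl in hN.
    exists (Rmax 0 (l + (1 - l) / 2)). split. split. apply Rmax_l.
    apply Rmax_lub_lt; lra.
    exists (S N). intros k hk. destruct k as [|k]; [lia|]. simpl.
    eapply Rle_trans; [|apply Rmax_r]. left; apply hN; lia.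
  - contradiction.
  - destruct (hl 0) as [N hN]. exists 0. split. lra. exists (S N).
    intros k hk. destruct k as [|k]; [lia|]. simpl. left; apply hN; lia.
Qed.

Lemma beta_bounded (a b : nat -> C) :
  Rbar_lt (LimSup_seq (fun n => Cmod (b n / a (S n)))) 1%R ->
  exists Bb, 0 <= Bb /\ forall k, Cmod (beta a b k) <= Bb.
Proof.
  intros h. destruct (beta_ev a b h) as [r [hr [K hK]]].
  exists (r + sum_n (fun j => Cmod (beta a b j)) K). 
  assert (hs : forall N j, (j <= N)%nat -> Cmod (beta a b j) <= sum_n (fun j => Cmod (beta a b j)) N).
  { induction N; intros j hj.
    - assert (j = 0%nat) by lia; subst. rewrite sum_O. lra.
    - rewrite sum_Sn. change plus with Rplus.
      destruct (Nat.eq_dec j (S N)). subst.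
      assert (0 <= sum_n (fun j => Cmod (beta a b j)) N). { 
        apply Rle_trans with (Cmod (beta a b 0)). apply Cmod_ge_0. apply IHN; lia. }
      lra.
      pose proof (Cmod_ge_0 (beta a b (S N))). specialize (IHN j ltac:(lia)). lra. }
  assert (0 <= sum_n (fun j => Cmod (beta a b j)) K).
  { apply Rle_trans with (Cmod (beta a b 0)). apply Cmod_ge_0. apply hs; lia. }
  split. lra. intro k. destruct (Nat.le_gt_cases K k).
  - specialize (hK k H0). lra.
  - specialize (hs K k ltac:(lia)). lra.
Qed.

Lemma taylor_unit (a b : nat -> C) n m :
  taylor a b (unitvec n) m =
  (if Nat.eqb m n then a n else if Nat.eqb m (S n) then b n else 0)%C.
Proof.
  unfold taylor, unitvec. destruct (Nat.eqb_spec m n).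
  - subst. destruct n as [|n]. simpl. ring.
    destruct (Nat.eqb_spec n (S n)); [lia|]. ring.
  - destruct m as [|m].
    + destruct (Nat.eqb_spec 0 (S n)); [lia|]. ring.
    + destruct (Nat.eqb_spec m n); destruct (Nat.eqb_spec (S m) (S n)); try lia.
      subst; ring. ring.
Qed.

Definition lam (a b w : nat -> C) n := Fw_coord a b w (unitvec n).
Definition dd (a b w : nat -> C) n m := (Fw_taylor w (taylor a b (unitvec n)) m / a m)%C.

Lemma lam_0 (a b w : nat -> C) n : lam a b w n 0 = dd a b w n 0.
Proof. reflexivity. Qed.

Lemma lam_S (a b w : nat -> C) n m : (forall k, a k <> 0%C) ->
  lam a b w n (S m) = (dd a b w n (S m) - beta a b (S m) * lam a b w n m)%C.
Proof.
  intros ha. unfold lam, dd, Fw_coord. simpl coord at 1. unfold beta. cbn [Fw_taylor]. field; apply ha.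
Qed.

Lemma dd_val (a b w : nat -> C) n m :
  dd a b w n m =
  (if Nat.eqb m (S n) then om a w n else if Nat.eqb m (S (S n)) then w (S n) * b n / a (S (S n)) else 0)%C.
Proof.
  unfold dd, Fw_taylor, om. destruct m as [|m].
  - simpl. destruct n; simpl; unfold Cdiv; ring.
  - rewrite taylor_unit.
    destruct (Nat.eqb_spec m n); destruct (Nat.eqb_spec (S m) (S n)); try lia.
    + subst. reflexivity.
    + destruct (Nat.eqb_spec m (S n)); destruct (Nat.eqb_spec (S m) (S (S n))); try lia.
      subst. reflexivity. unfold Cdiv; ring.
Qed.

Lemma lam_tail (a b w : nat -> C) n m : (forall k, a k <> 0%C) -> (S (S n) <= m)%nat ->
  lam a b w n (S m) = (- beta a b (S m) * lam a b w n m)%C.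
Proof.
  intros ha hm. rewrite lam_S by auto. rewrite dd_val.
  destruct (Nat.eqb_spec (S m) (S n)); [lia|]. destruct (Nat.eqb_spec (S m) (S (S n))); [lia|]. ring.
Qed.

Lemma sum_le_fin (f : nat -> R) N j : (forall k, 0 <= f k) -> (j <= N)%nat -> f j <= sum_n f N.
Proof.
  intros hf. revert j; induction N; intros j hj.
  - assert (j = 0%nat) by lia; subst. rewrite sum_O. lra.
  - rewrite sum_Sn. change plus with Rplus.
    destruct (Nat.eq_dec j (S N)). subst.
    assert (0 <= sum_n f N) by (apply Rle_trans with (f 0%nat); [apply hf| apply IHN; lia]).
    lra. pose proof (hf (S N)). specialize (IHN j ltac:(lia)). lra.
Qed.

Lemma lam_bounded (a b w : nat -> C) n : (forall k, a k <> 0%C) ->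
  (exists K, forall k, (K <= k)%nat -> Cmod (beta a b k) <= 1) ->
  exists C0, forall m, Cmod (lam a b w n m) <= C0.
Proof.
  intros ha [K hK]. set (K1 := (K + S (S n))%nat).
  exists (sum_n (fun j => Cmod (lam a b w n j)) K1). intro m.
  destruct (Nat.le_gt_cases m K1).
  - apply sum_le_fin with (f := fun j => Cmod (lam a b w n j)); auto. intro; apply Cmod_ge_0.
  - eapply Rle_trans; [|apply sum_le_fin with (f := fun j => Cmod (lam a b w n j)) (j := K1); auto; intro; apply Cmod_ge_0].
    assert (forall d, Cmod (lam a b w n (K1 + d)) <= Cmod (lam a b w n K1)).
    { induction d. rewrite Nat.add_0_r; lra.
      rewrite Nat.add_succ_r, lam_tail by (auto; lia). rewrite Cmod_mult, Cmod_opp.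
      eapply Rle_trans; [|exact IHd]. rewrite <- (Rmult_1_l (Cmod (lam a b w n (K1 + d)))) at 2.
      apply Rmult_le_compat_r. apply Cmod_ge_0. apply hK; lia. }
    replace m with (K1 + (m - K1))%nat by lia. auto.
Qed.

Lemma Re_sum (s : nat -> C) N : sum_n (fun k => Re (s k)) N = Re (sum_n s N).
Proof.
  induction N. rewrite !sum_O; auto.
  rewrite !sum_Sn, IHN. reflexivity.
Qed.
Lemma Im_sum (s : nat -> C) N : sum_n (fun k => Im (s k)) N = Im (sum_n s N).
Proof.
  induction N. rewrite !sum_O; auto.
  rewrite !sum_Sn, IHN. reflexivity.
Qed.

Lemma im_le_Cmod (c : C) : Rabs (Im c) <= Cmod c.
Proof. eapply Rle_trans; [|apply Rmax_Cmod]. apply Rmax_r. Qed.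

Lemma re_lim (s : nat -> C) (L : C) (rem : nat -> C) (f : C -> R) :
  (forall x y, f (x + y)%C = f x + f y) -> (forall x, Rabs (f x) <= Cmod x) ->
  (exists N0, forall N, (N0 <= N)%nat -> sum_n s N = (L + rem N)%C) -> tends0 rem ->
  is_lim_seq (fun N => f (sum_n s N)) (f L).
Proof.
  intros hadd hle [N0 hN0] hrem. apply is_lim_seq_spec. intro eps.
  destruct (hrem eps (cond_pos eps)) as [N1 hN1]. exists (N0 + N1)%nat. intros N hN.
  rewrite hN0 by lia. rewrite hadd. replace (f L + f (rem N) - f L) with (f (rem N)) by ring.
  eapply Rle_lt_trans. apply hle. apply hN1; lia.
Qed.

Lemma Cseries_lim (s : nat -> C) (L : C) (rem : nat -> C) :
  (exists N0, forall N, (N0 <= N)%nat -> sum_n s N = (L + rem N)%C) -> tends0 rem ->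
  Cseries s = L.
Proof.
  intros h1 h2. unfold Cseries. destruct L as [l1 l2].
  f_equal.
  - apply is_series_unique. apply is_series_R_iff.
    apply is_lim_seq_ext with (fun N => Re (sum_n s N)). intro; symmetry; apply Re_sum.
    apply (re_lim s (l1, l2) rem Re); auto; apply re_le_Cmod.
  - apply is_series_unique. apply is_series_R_iff.
    apply is_lim_seq_ext with (fun N => Im (sum_n s N)). intro; symmetry; apply Im_sum.
    apply (re_lim s (l1, l2) rem Im); auto; apply im_le_Cmod.
Qed.

Lemma sum_two (g : nat -> C) i : (forall k, k <> i -> k <> S i -> g k = 0%C) ->
  forall N, (S i <= N)%nat -> @eq C (sum_n g N) (g i + g (S i))%C.
Proof.
  intros hg.
  assert (h0 : forall N, (N < i)%nat -> @eq C (sum_n g N) 0%C).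
  { induction N; intro h. rewrite sum_O. apply hg; lia.
    rewrite sum_Sn, IHN by lia. rewrite (hg (S N)) by lia. apply Cplus_0_l. }
  assert (h1 : sum_n g i = g i).
  { destruct i. rewrite sum_O; auto. rewrite sum_Sn, h0 by lia. apply Cplus_0_l. }
  intros N hN. induction hN.
  - rewrite sum_Sn, h1. reflexivity.
  - rewrite sum_Sn, IHhN. rewrite (hg (S m)) by lia. change plus with Cplus. ring.
Qed.

Lemma partial_id (a b w : nat -> C) (y : nat -> C) n N : (forall k, a k <> 0%C) ->
  @eq C (sum_n (fun k => Jt a b y k * lam a b w n k)%C N)
  (sum_n (fun k => y k * dd a b w n k) N + beta a b (S N) * y (S N) * lam a b w n N)%C.
Proof.
  intros ha. induction N.
  - rewrite !sum_O. unfold Jt. rewrite lam_0. ring.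
  - rewrite !sum_Sn, IHN. change plus with Cplus.
    assert (hd : dd a b w n (S N) = (lam a b w n (S N) + beta a b (S N) * lam a b w n N)%C).
    { rewrite lam_S by auto. ring. }
    rewrite hd. unfold Jt. ring.
Qed.

Lemma key_step (a b w : nat -> C) (y : nat -> C) n : (forall k, a k <> 0%C) ->
  (exists K, forall k, (K <= k)%nat -> Cmod (beta a b k) <= 1) ->
  tends0 y ->
  Fw_adj a b w (Jt a b y) n = Jt a b (Bw a w y) n.
Proof.
  intros ha hK hy. unfold Fw_adj. fold (lam a b w n).
  destruct (lam_bounded a b w n ha hK) as [C0 hC0].
  apply Cseries_lim with (rem := fun N => (- y (S N) * lam a b w n (S N))%C).
  - exists (S (S n)). intros N hN. rewrite partial_id by auto.
    rewrite (sum_two (fun k => y k * dd a b w n k)%C (S n)); auto.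
    + rewrite (lam_tail a b w n N) by (auto; lia).
      rewrite !dd_val. rewrite Nat.eqb_refl. destruct (Nat.eqb_spec (S (S n)) (S n)); [lia|].
      rewrite Nat.eqb_refl. unfold Jt, Bw, om, beta. match goal with |- ?x = ?y => change (@eq C x y) end. field. repeat split; apply ha.
    + intros k h1 h2. rewrite dd_val. destruct (Nat.eqb_spec k (S n)); [lia|].
      destruct (Nat.eqb_spec k (S (S n))); [lia|]. ring.
  - intros eps he.
    assert (hC : 0 < Rabs C0 + 1) by (pose proof (Rabs_pos C0); lra).
    destruct (hy (eps / (Rabs C0 + 1))) as [N hN]. apply Rdiv_lt_0_compat; auto.
    exists N. intros m hm. rewrite Cmod_mult, Cmod_opp.
    apply Rle_lt_trans with (Cmod (y (S m)) * (Rabs C0 + 1)).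
    apply Rmult_le_compat_l. apply Cmod_ge_0. specialize (hC0 (S m)). pose proof (Rle_abs C0). lra.
    specialize (hN (S m) ltac:(lia)). apply Rmult_lt_compat_r with (r := Rabs C0 + 1) in hN; auto.
    unfold Rdiv in hN. rewrite Rmult_assoc, Rinv_l in hN by lra. lra.
Qed.

Lemma ex_series_fin (f : nat -> R) N : (forall k, (N <= k)%nat -> f k = 0) -> ex_series f.
Proof.
  intros h. apply (ex_series_incr_n (V:=R_NormedModule) f N).
  apply ex_series_ext with (fun _ => 0). intro k; rewrite h by lia; auto.
  exists 0. apply is_series_R_iff. apply is_lim_seq_ext with (fun _ => 0).
  intro n. rewrite sum_n_const. simpl; ring. apply is_lim_seq_const.
Qed.

Lemma Cmod_sub_ge (x : C) (c : R) : 0 <= c -> c - Cmod x <= Cmod (x - RtoC c)%C.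
Proof.
  intros hc. assert (Cmod (RtoC c) <= Cmod x + Cmod (x - RtoC c)%C).
  { assert (e : Cmod (RtoC c) = Cmod (x + - (x - RtoC c))%C) by (f_equal; ring).
    rewrite e. eapply Rle_trans. apply Cmod_triangle.
    rewrite Cmod_opp. lra. }
  rewrite Cmod_R, Rabs_pos_eq in H by auto. lra.
Qed.

Lemma not_hyp (T : (nat -> C) -> (nat -> C)) q : 0 < q ->
  (forall u, in_lq q u -> forall n,
     is_lim_seq (fun nu => Cmod (Nat.iter nu T u n)) 0%R) ->
  ~ hypercyclic_lq q T.
Proof.
  intros hq H [u [hu hd]].
  specialize (H u hu 0%nat). apply is_lim_seq_spec in H.
  destruct (H (mkposreal 1 Rlt_0_1)) as [N0 hN0]. simpl in hN0.
  set (c := 2 + sum_n (fun nu => Cmod (Nat.iter nu T u 0%nat)) N0).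
  assert (hs : forall nu, (nu <= N0)%nat -> Cmod (Nat.iter nu T u 0%nat) <= c - 2).
  { intros nu hnu. unfold c. 
    cut (Cmod (Nat.iter nu T u 0%nat) <= sum_n (fun nu => Cmod (Nat.iter nu T u 0%nat)) N0). intro; simpl in *; lra.
    apply (sum_le_fin (fun nu => Cmod (Nat.iter nu T u 0%nat))); auto. intro; apply Cmod_ge_0. }
  assert (hc : 2 <= c). { pose proof (hs 0%nat ltac:(lia)). pose proof (Cmod_ge_0 (Nat.iter 0 T u 0%nat)). lra. }
  set (v := fun k : nat => if Nat.eqb k 0 then RtoC c else 0%C).
  assert (hv : in_lq q v).
  { apply ex_series_fin with 1%nat. intros k hk. unfold v. destruct (Nat.eqb_spec k 0); [lia|].
    rewrite Cmod_0. apply rpow_0. }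
  destruct (hd v hv 1 Rlt_0_1) as [nu [hin hlt]].
  destruct (lq_minus q _ _ (Rlt_le _ _ hq) hin hv) as [hdm _].
  pose proof (lq_norm_ge q _ 0%nat hq hdm) as hge. simpl in hge.
  assert (hdiff : c - Cmod (Nat.iter nu T u 0%nat) <= Cmod (Nat.iter nu T u 0%nat - v 0%nat)%C).
  { unfold v. simpl. apply Cmod_sub_ge. lra. }
  destruct (Nat.le_gt_cases N0 nu).
  - specialize (hN0 nu H0). rewrite Rminus_0_r, Rabs_pos_eq in hN0 by apply Cmod_ge_0. lra.
  - specialize (hs nu ltac:(lia)). lra.
Qed.

Fixpoint Qp (a w : nat -> C) (m nu : nat) : C :=
  match nu with O => 1%C | S nu' => (om a w m * Qp a w (S m) nu')%C end.

Lemma iter_Bw (a w y : nat -> C) nu m : Nat.iter nu (Bw a w) y m = (Qp a w m nu * y (m + nu)%nat)%C.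
Proof.
  revert m; induction nu; intro m.
  - simpl. rewrite Nat.add_0_r. ring.
  - simpl Nat.iter. unfold Bw at 1. rewrite IHnu. simpl Qp. rewrite Nat.add_succ_r. simpl. ring.
Qed.

Lemma Qp_add (a w : nat -> C) i n nu : Qp a w i (n + nu) = (Qp a w i n * Qp a w (i + n) nu)%C.
Proof.
  revert i; induction n; intro i.
  - simpl. rewrite Nat.add_0_r. ring.
  - simpl. rewrite IHn. rewrite Nat.add_succ_r. simpl. ring.
Qed.

Lemma om_nz (a w : nat -> C) m : (forall k, a k <> 0%C) -> (forall k, w k <> 0%C) -> om a w m <> 0%C.
Proof.
  intros ha hw. unfold om. intro h. apply (f_equal Cmod) in h. rewrite Cmod_0 in h.
  rewrite Cmod_div, Cmod_mult in h by auto.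
  assert (0 < Cmod (w m) * Cmod (a m) / Cmod (a (S m))).
  { apply Rdiv_lt_0_compat. apply Rmult_lt_0_compat; apply Cmod_gt_0; auto. apply Cmod_gt_0; auto. }
  lra.
Qed.

Lemma Qp_nz (a w : nat -> C) m nu : (forall k, a k <> 0%C) -> (forall k, w k <> 0%C) -> Qp a w m nu <> 0%C.
Proof.
  intros ha hw. revert m; induction nu; intro m; simpl.
  - intro h. apply (f_equal Cmod) in h. rewrite Cmod_1, Cmod_0 in h. lra.
  - intro h. apply (f_equal Cmod) in h. rewrite Cmod_0, Cmod_mult in h.
    apply Rmult_integral in h. destruct h as [h|h]; apply Cmod_eq_0 in h.
    apply (om_nz a w m ha hw h). apply (IHnu (S m) h).
Qed.

Lemma Qp_bound (a w : nat -> C) M i nu : (forall n, Cmod (om a w n) <= M) ->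
  Cmod (Qp a w i nu) <= M ^ nu.
Proof.
  intros hM. revert i; induction nu; intro i; simpl.
  - rewrite Cmod_1; lra.
  - rewrite Cmod_mult. apply Rmult_le_compat. apply Cmod_ge_0. apply Cmod_ge_0. apply hM. apply IHnu.
Qed.

Lemma Bw_tends0 (a w y : nat -> C) M : (forall n, Cmod (om a w n) <= M) -> tends0 y -> tends0 (Bw a w y).
Proof.
  intros hM hy eps he.
  assert (hM' : 0 < Rabs M + 1) by (pose proof (Rabs_pos M); lra).
  destruct (hy (eps / (Rabs M + 1))) as [N hN]. apply Rdiv_lt_0_compat; auto.
  exists N. intros n hn. unfold Bw. rewrite Cmod_mult.
  apply Rle_lt_trans with ((Rabs M + 1) * Cmod (y (S n))).
  apply Rmult_le_compat_r. apply Cmod_ge_0. specialize (hM n). pose proof (Rle_abs M). lra.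
  specialize (hN (S n) ltac:(lia)). apply Rmult_lt_compat_l with (r := Rabs M + 1) in hN; auto.
  unfold Rdiv in hN. rewrite (Rmult_comm eps), <- Rmult_assoc, Rinv_r in hN by lra. lra.
Qed.

Lemma iter_key (a b w y : nat -> C) M : (forall k, a k <> 0%C) ->
  (exists K, forall k, (K <= k)%nat -> Cmod (beta a b k) <= 1) ->
  (forall n, Cmod (om a w n) <= M) -> tends0 y ->
  forall nu, Nat.iter nu (Fw_adj a b w) (Jt a b y) = Jt a b (Nat.iter nu (Bw a w) y).
Proof.
  intros ha hK hM hy nu. 
  assert (ht : forall nu, tends0 (Nat.iter nu (Bw a w) y)).
  { induction nu0. auto. simpl. apply Bw_tends0 with M; auto. }
  induction nu. reflexivity.
  simpl. rewrite IHnu. apply functional_extensionality. intro n.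
  apply key_step; auto.
Qed.

Lemma Jt_lq (a b y : nat -> C) q Bb : 0 <= q -> 0 <= Bb -> (forall k, Cmod (beta a b k) <= Bb) ->
  in_lq q y -> in_lq q (Jt a b y) /\ Sq q (Jt a b y) <= rpow 2 q * (1 + rpow Bb q) * Sq q y.
Proof.
  intros hq hB hb hy.
  destruct (lq_shift q y hq hy) as [hs1 hs2].
  destruct (lq_dom q (fun k => beta a b (S k) * y (S k))%C (fun k => y (S k)) Bb hq hB) as [h1 h2]; auto.
  { intro n. rewrite Cmod_mult. apply Rmult_le_compat_r. apply Cmod_ge_0. auto. }
  destruct (lq_plus q y _ hq hy h1) as [h3 h4]. split. exact h3.
  unfold Jt. eapply Rle_trans. exact h4.
  pose proof (rpow_ge0 2 q). pose proof (rpow_ge0 Bb q). pose proof (Sq_nonneg q y hy).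
  assert (Sq q (fun k => beta a b (S k) * y (S k))%C <= rpow Bb q * Sq q y).
  { eapply Rle_trans. exact h2. apply Rmult_le_compat_l; auto. }
  replace (rpow 2 q * (1 + rpow Bb q) * Sq q y) with (rpow 2 q * (Sq q y + rpow Bb q * Sq q y)) by ring.
  apply Rmult_le_compat_l; auto. lra.
Qed.

Lemma Bw_lq (a w y : nat -> C) q M : 0 <= q -> 0 <= M -> (forall n, Cmod (om a w n) <= M) ->
  in_lq q y -> in_lq q (Bw a w y).
Proof.
  intros hq hM hb hy. destruct (lq_shift q y hq hy) as [hs1 hs2].
  apply (lq_dom q (Bw a w y) (fun k => y (S k)) M hq hM); auto.
  intro n. unfold Bw. rewrite Cmod_mult. apply Rmult_le_compat_r. apply Cmod_ge_0. auto.
Qed.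

Lemma iterBw_lq (a w y : nat -> C) q M : 0 <= q -> 0 <= M -> (forall n, Cmod (om a w n) <= M) ->
  in_lq q y -> forall nu, in_lq q (Nat.iter nu (Bw a w) y).
Proof. intros hq hM hb hy nu. induction nu. auto. simpl. apply Bw_lq with M; auto. Qed.

Lemma cs_ex (t : nat -> C) r B : 0 <= r < 1 -> (forall j, Cmod (t j) <= r ^ j * B) ->
  ex_series (fun j => Re (t j)) /\ ex_series (fun j => Im (t j)).
Proof.
  intros hr hb. assert (hg : ex_series (fun j => r ^ j * B)).
  { apply ex_series_scal_r. apply ex_series_geom. rewrite Rabs_pos_eq; lra. }
  split.
  - apply (ex_series_le (fun j => Re (t j)) (fun j => r ^ j * B)); auto; intro j.
    change norm with Rabs; eapply Rle_trans; [apply re_le_Cmod|auto].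
  - apply (ex_series_le (fun j => Im (t j)) (fun j => r ^ j * B)); auto; intro j.
    change norm with Rabs; eapply Rle_trans; [apply im_le_Cmod|auto].
Qed.

Lemma cs_re_bound (t : nat -> C) r B (f : C -> R) : 0 <= r < 1 -> (forall j, Cmod (t j) <= r ^ j * B) ->
  (forall x, Rabs (f x) <= Cmod x) ->
  Rabs (Series (fun j => f (t j))) <= B / (1 - r).
Proof.
  intros hr hb hf. assert (hg : ex_series (fun j => r ^ j * B)).
  { apply ex_series_scal_r. apply ex_series_geom. rewrite Rabs_pos_eq; lra. }
  assert (ha : ex_series (fun j => Rabs (f (t j)))).
  { apply (ex_series_le (fun j => Rabs (f (t j))) (fun j => r ^ j * B)); auto. intro j. change norm with Rabs.
    rewrite Rabs_Rabsolu. eapply Rle_trans; [apply hf|auto]. }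
  eapply Rle_trans. apply Series_Rabs; auto.
  eapply Rle_trans. apply Series_le with (b := fun j => r ^ j * B); auto.
  intro j; split. apply Rabs_pos. eapply Rle_trans; [apply hf|auto].
  rewrite Series_scal_r, Series_geom by (rewrite Rabs_pos_eq; lra). unfold Rdiv. lra.
Qed.

Lemma cs_bound (t : nat -> C) r B : 0 <= r < 1 -> (forall j, Cmod (t j) <= r ^ j * B) ->
  Cmod (Cseries t) <= 2 * (B / (1 - r)).
Proof.
  intros hr hb.
  pose proof (cs_re_bound t r B Re hr hb re_le_Cmod) as h1.
  pose proof (cs_re_bound t r B Im hr hb im_le_Cmod) as h2.
  eapply Rle_trans. apply Cmod_2Rmax. unfold Cseries; simpl.
  assert (0 <= B / (1 - r)). { eapply Rle_trans; [apply Rabs_pos|exact h1]. }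
  assert (sqrt 2 <= 2). { rewrite <- (sqrt_square 2) at 2 by lra. apply sqrt_le_1_alt. lra. }
  assert (Rmax (Rabs (Series (fun j => Re (t j)))) (Rabs (Series (fun j => Im (t j)))) <= B / (1 - r)).
  { apply Rmax_lub; auto. }
  assert (0 <= Rmax (Rabs (Series (fun j => Re (t j)))) (Rabs (Series (fun j => Im (t j))))).
  { eapply Rle_trans; [|apply Rmax_l]. apply Rabs_pos. }
  apply Rle_trans with (2 * Rmax (Rabs (Series (fun j => Re (t j)))) (Rabs (Series (fun j => Im (t j))))).
  apply Rmult_le_compat_r; auto. apply Rmult_le_compat_l; lra.
Qed.

Lemma cs_incr (t : nat -> C) : ex_series (fun j => Re (t j)) -> ex_series (fun j => Im (t j)) ->
  Cseries t = (t 0%nat + Cseries (fun j => t (S j)))%C.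
Proof.
  intros h1 h2. unfold Cseries. rewrite (Series_incr_1 (fun j => Re (t j))) by auto.
  rewrite (Series_incr_1 (fun j => Im (t j))) by auto. destruct (t 0%nat). reflexivity.
Qed.

Lemma cs_scal (t : nat -> C) (c : C) : ex_series (fun j => Re (t j)) -> ex_series (fun j => Im (t j)) ->
  Cseries (fun j => c * t j)%C = (c * Cseries t)%C.
Proof.
  intros h1 h2. unfold Cseries. destruct c as [c1 c2]. simpl.
  change (fun k : nat => c1 * fst (t k) - c2 * snd (t k)) with (fun k : nat => c1 * Re (t k) - c2 * Im (t k)).
  change (fun k : nat => c1 * snd (t k) + c2 * fst (t k)) with (fun k : nat => c1 * Im (t k) + c2 * Re (t k)).
  rewrite Series_minus, Series_plus by (apply exR_scal_l; auto).
  rewrite !Series_scal_l.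
  unfold Cmult; simpl. f_equal; ring.
Qed.

Lemma tends0_bounded (u : nat -> C) : tends0 u -> exists Ub, 0 <= Ub /\ forall m, Cmod (u m) <= Ub.
Proof.
  intros h. destruct (h 1 Rlt_0_1) as [N hN].
  exists (1 + sum_n (fun m => Cmod (u m)) N).
  assert (0 <= sum_n (fun m => Cmod (u m)) N).
  { apply Rle_trans with (Cmod (u 0%nat)). apply Cmod_ge_0. apply (sum_le_fin (fun m => Cmod (u m))); [intro; apply Cmod_ge_0|lia]. }
  split. lra. intro m. destruct (Nat.le_gt_cases N m).
  - specialize (hN m H0). lra.
  - pose proof (sum_le_fin (fun m => Cmod (u m)) N m (fun _ => Cmod_ge_0 _) ltac:(lia)). simpl in H1. lra.
Qed.

Fixpoint Pb (a b : nat -> C) (k j : nat) : C :=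
  match j with O => 1%C | S j' => (- beta a b (S k) * Pb a b (S k) j')%C end.
Definition sser (a b u : nat -> C) k j := (Pb a b k j * u (k + j)%nat)%C.
Definition yser (a b u : nat -> C) k := Cseries (sser a b u k).

Lemma Pb_bound (a b : nat -> C) r K0 k j : 0 <= r -> (forall m, (K0 <= m)%nat -> Cmod (beta a b m) <= r) ->
  (K0 <= k)%nat -> Cmod (Pb a b k j) <= r ^ j.
Proof.
  intros hr hK. revert k; induction j; intros k hk; cbn [Pb pow].
  - rewrite Cmod_1; lra.
  - rewrite Cmod_mult, Cmod_opp. apply Rmult_le_compat. apply Cmod_ge_0. apply Cmod_ge_0.
    apply hK; lia. apply IHj; lia.
Qed.

Lemma sser_bound (a b u : nat -> C) r K0 k B : 0 <= r -> (forall m, (K0 <= m)%nat -> Cmod (beta a b m) <= r) ->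
  (K0 <= k)%nat -> (forall m, (k <= m)%nat -> Cmod (u m) <= B) ->
  forall j, Cmod (sser a b u k j) <= r ^ j * B.
Proof.
  intros hr hK hk hB j. unfold sser. rewrite Cmod_mult. apply Rmult_le_compat.
  apply Cmod_ge_0. apply Cmod_ge_0. eapply Pb_bound; eauto. apply hB; lia.
Qed.

Lemma Cseries_ext (s t : nat -> C) : (forall j, s j = t j) -> Cseries s = Cseries t.
Proof. intro h. replace s with t; auto. apply functional_extensionality; intro; auto. Qed.

Lemma yser_eq (a b u : nat -> C) r K0 k : 0 <= r < 1 -> (forall m, (K0 <= m)%nat -> Cmod (beta a b m) <= r) ->
  (K0 <= k)%nat -> tends0 u ->
  yser a b u k = (u k - beta a b (S k) * yser a b u (S k))%C.
Proof.
  intros hr hK hk hu. destruct (tends0_bounded u hu) as [Ub [hUb0 hUb]].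
  pose proof (sser_bound a b u r K0 k Ub ltac:(lra) hK hk (fun m _ => hUb m)) as hb1.
  pose proof (sser_bound a b u r K0 (S k) Ub ltac:(lra) hK ltac:(lia) (fun m _ => hUb m)) as hb2.
  destruct (cs_ex _ _ _ hr hb1) as [e1 e2]. destruct (cs_ex _ _ _ hr hb2) as [e3 e4].
  unfold yser. rewrite cs_incr by auto.
  rewrite (Cseries_ext _ (fun j => (- beta a b (S k)) * sser a b u (S k) j)%C).
  - rewrite cs_scal by auto. unfold sser at 1. simpl. rewrite Nat.add_0_r. ring.
  - intro j. unfold sser. simpl. rewrite Nat.add_succ_r. ring.
Qed.

Lemma yser_small (a b u : nat -> C) r K0 k B : 0 <= r < 1 -> (forall m, (K0 <= m)%nat -> Cmod (beta a b m) <= r) ->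
  (K0 <= k)%nat -> (forall m, (k <= m)%nat -> Cmod (u m) <= B) ->
  Cmod (yser a b u k) <= 2 * (B / (1 - r)).
Proof.
  intros hr hK hk hB. apply cs_bound; auto. eapply sser_bound; eauto. lra.
Qed.

Fixpoint ydown (a b u : nat -> C) K0 d : C :=
  match d with O => yser a b u K0 | S d' => (u (K0 - S d')%nat - beta a b (K0 - d')%nat * ydown a b u K0 d')%C end.
Definition ysol (a b u : nat -> C) K0 k := if Nat.leb K0 k then yser a b u k else ydown a b u K0 (K0 - k).

Lemma solve_Jt (a b u : nat -> C) : tends0 u ->
  (exists r, 0 <= r < 1 /\ exists K, forall k, (K <= k)%nat -> Cmod (beta a b k) <= r) ->
  exists y, tends0 y /\ Jt a b y = u.
Proof.
  intros hu [r [hr [K0 hK]]]. exists (ysol a b u K0). split.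
  - intros eps he.
    destruct (hu (eps * (1 - r) / 4)) as [N hN].
    { apply Rdiv_lt_0_compat; [apply Rmult_lt_0_compat|]; lra. }
    exists (N + K0)%nat. intros k hk. unfold ysol. destruct (Nat.leb_spec K0 k); [|lia].
    eapply Rle_lt_trans. apply (yser_small a b u r K0 k (eps * (1 - r) / 4) hr hK ltac:(lia)).
    intros m hm. left; apply hN; lia.
    replace (2 * (eps * (1 - r) / 4 / (1 - r))) with (eps / 2) by (field; lra). lra.
  - apply functional_extensionality. intro k. unfold Jt, ysol.
    destruct (Nat.leb_spec K0 k).
    + destruct (Nat.leb_spec K0 (S k)); [|lia]. rewrite (yser_eq a b u r K0 k); auto. ring.
    + replace (K0 - k)%nat with (S (K0 - S k)) by lia. simpl ydown.
      replace (K0 - S (K0 - S k))%nat with k by lia. replace (K0 - (K0 - S k))%nat with (S k) by lia.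
      destruct (Nat.leb_spec K0 (S k)).
      * replace (K0 - S k)%nat with 0%nat by lia. simpl. assert (S k = K0) by lia. subst. ring.
      * ring.
Qed.

Lemma lim_helper (x : nat -> C) (y : nat -> C) n A : 0 <= A ->
  (forall nu, Cmod (x nu) <= A * (Cmod (y (n + nu)%nat) + Cmod (y (S n + nu)%nat))) -> tends0 y ->
  is_lim_seq (fun nu => Cmod (x nu)) 0.
Proof.
  intros hA hx hy. apply is_lim_seq_spec. intro eps.
  destruct (hy (eps / (2 * (A + 1)))) as [N hN].
  { apply Rdiv_lt_0_compat. apply cond_pos. lra. }
  exists N. intros nu hnu. rewrite Rminus_0_r, Rabs_pos_eq by apply Cmod_ge_0.
  eapply Rle_lt_trans. apply hx.
  pose proof (hN (n + nu)%nat ltac:(lia)). pose proof (hN (S n + nu)%nat ltac:(lia)).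
  pose proof (cond_pos eps).
  apply Rle_lt_trans with ((A + 1) * (Cmod (y (n + nu)%nat) + Cmod (y (S n + nu)%nat))).
  apply Rmult_le_compat_r. pose proof (Cmod_ge_0 (y (n + nu)%nat)); pose proof (Cmod_ge_0 (y (S n + nu)%nat)); lra. lra.
  apply Rlt_le_trans with ((A + 1) * (eps / (2 * (A + 1)) + eps / (2 * (A + 1)))).
  apply Rmult_lt_compat_l. lra. lra.
  right. field. lra.
Qed.

Lemma Qp_ratio (a w : nat -> C) i nu Pm : (forall k, a k <> 0%C) -> (forall k, w k <> 0%C) ->
  (forall m, Cmod (Qp a w 0 m) <= Pm) -> Cmod (Qp a w i nu) <= Pm / Cmod (Qp a w 0 i).
Proof.
  intros ha hw hP. pose proof (Qp_add a w 0 i nu) as e. simpl in e.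
  assert (hpos : 0 < Cmod (Qp a w 0 i)) by (apply Cmod_gt_0; apply Qp_nz; auto).
  apply (f_equal Cmod) in e. rewrite Cmod_mult in e.
  apply Rmult_le_reg_l with (Cmod (Qp a w 0 i)); auto.
  rewrite <- e. unfold Rdiv. rewrite (Rmult_comm Pm), <- Rmult_assoc, Rinv_r by lra. rewrite Rmult_1_l. auto.
Qed.

Lemma orbits_to0 (a b w : nat -> C) q M Pm : 0 < q ->
  (forall k, a k <> 0%C) -> (forall k, w k <> 0%C) ->
  (exists r, 0 <= r < 1 /\ exists K, forall k, (K <= k)%nat -> Cmod (beta a b k) <= r) ->
  (forall n, Cmod (om a w n) <= M) ->
  (forall m, Cmod (Qp a w 0 m) <= Pm) ->
  forall u, in_lq q u -> forall n,
     is_lim_seq (fun nu => Cmod (Nat.iter nu (Fw_adj a b w) u n)) 0%R.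
Proof.
  intros hq ha hw hK hM hP u hu n.
  assert (hu0 : tends0 u) by (intros eps he; apply (lq_to0 q u hq hu eps he)).
  destruct (solve_Jt a b u hu0 hK) as [y [hy hJ]]. subst u.
  assert (hK1 : exists K, forall k, (K <= k)%nat -> Cmod (beta a b k) <= 1).
  { destruct hK as [r [hr [K hK]]]. exists K. intros k hk. specialize (hK k hk). lra. }
  destruct hK as [r [hr [K hKr]]].
  assert (hBb : exists Bb, 0 <= Bb /\ forall k, Cmod (beta a b k) <= Bb).
  { exists (r + sum_n (fun j => Cmod (beta a b j)) K).
    assert (0 <= sum_n (fun j => Cmod (beta a b j)) K).
    { apply Rle_trans with (Cmod (beta a b 0)). apply Cmod_ge_0. apply (sum_le_fin (fun j => Cmod (beta a b j))); [intro; apply Cmod_ge_0|lia]. }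
    split. lra. intro k. destruct (Nat.le_gt_cases K k).
    - specialize (hKr k H0). lra.
    - pose proof (sum_le_fin (fun j => Cmod (beta a b j)) K k (fun _ => Cmod_ge_0 _) ltac:(lia)). simpl in H1. lra. }
  destruct hBb as [Bb [hBb0 hBb]].
  apply lim_helper with (y := y) (n := n) (A := Pm / Cmod (Qp a w 0 n) + Bb * (Pm / Cmod (Qp a w 0 (S n)))).
  - assert (0 <= Pm) by (eapply Rle_trans; [apply Cmod_ge_0|apply (hP 0%nat)]).
    assert (0 < Cmod (Qp a w 0 n)) by (apply Cmod_gt_0; apply Qp_nz; auto).
    assert (0 < Cmod (Qp a w 0 (S n))) by (apply Cmod_gt_0; apply Qp_nz; auto).
    assert (0 <= Pm / Cmod (Qp a w 0 n)) by (apply Rdiv_le_0_compat; lra).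
    assert (0 <= Pm / Cmod (Qp a w 0 (S n))) by (apply Rdiv_le_0_compat; lra).
    pose proof (Rmult_le_pos _ _ hBb0 H3). lra.
  - intro nu. rewrite (iter_key a b w y M ha hK1 hM hy nu). unfold Jt. rewrite !iter_Bw.
    eapply Rle_trans. apply Cmod_triangle. rewrite !Cmod_mult.
    pose proof (Qp_ratio a w n nu Pm ha hw hP). pose proof (Qp_ratio a w (S n) nu Pm ha hw hP).
    pose proof (hBb (S n)).
    pose proof (Cmod_ge_0 (y (n + nu)%nat)). pose proof (Cmod_ge_0 (y (S n + nu)%nat)).
    pose proof (Cmod_ge_0 (Qp a w n nu)). pose proof (Cmod_ge_0 (Qp a w (S n) nu)). pose proof (Cmod_ge_0 (beta a b (S n))).
    assert (Cmod (Qp a w n nu) * Cmod (y (n + nu)%nat) <= Pm / Cmod (Qp a w 0 n) * Cmod (y (n + nu)%nat))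
      by (apply Rmult_le_compat_r; auto).
    assert (Cmod (beta a b (S n)) * (Cmod (Qp a w (S n) nu) * Cmod (y (S n + nu)%nat)) <=
            Bb * (Pm / Cmod (Qp a w 0 (S n))) * Cmod (y (S n + nu)%nat)).
    { rewrite <- Rmult_assoc. apply Rmult_le_compat_r; auto. apply Rmult_le_compat; auto. }
    assert (0 <= Pm / Cmod (Qp a w 0 n) * Cmod (y (S n + nu)%nat)).
    { apply Rmult_le_pos; auto. eapply Rle_trans; [apply Cmod_ge_0|apply H]. }
    assert (0 <= Bb * (Pm / Cmod (Qp a w 0 (S n))) * Cmod (y (n + nu)%nat)).
    { apply Rmult_le_pos; auto. apply Rmult_le_pos; auto. eapply Rle_trans; [apply Cmod_ge_0|apply H0]. }
    replace (S n + nu)%nat with (n + S nu)%nat in * by lia. simpl Nat.add in *.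
    nra.
  - auto.
Qed.

Definition ind (P : bool) : R := if P then 1 else 0.

Lemma count_one (a s L : nat) : sum_n (fun m => ind (Nat.eqb (m + s) a)) L <= 1.
Proof.
  assert (forall L, sum_n (fun m => ind (Nat.eqb (m + s) a)) L = if andb (Nat.leb (a - s) L) (Nat.leb s a) then 1 else 0).
  { induction L0.
    - rewrite sum_O. unfold ind. destruct (Nat.eqb_spec (0 + s) a); destruct (Nat.leb_spec (a - s) 0);
      destruct (Nat.leb_spec s a); simpl; try lia; auto.
    - rewrite sum_Sn, IHL0. unfold ind. change plus with Rplus.
      destruct (Nat.eqb_spec (S L0 + s) a); destruct (Nat.leb_spec (a - s) L0); destruct (Nat.leb_spec (a - s) (S L0));
      destruct (Nat.leb_spec s a); simpl; try lia; lra. }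
  rewrite H. destruct (andb _ _); lra.
Qed.

Lemma count_block (N a s L : nat) : sum_n (fun m => ind (andb (Nat.leb a (m + s)) (Nat.ltb (m + s) (a + N)))) L <= INR N.
Proof.
  revert a; induction N; intro a.
  - rewrite sum_n_ext with (b := fun _ => 0). rewrite sum_n_const. simpl; lra.
    intro m. unfold ind. destruct (Nat.leb_spec a (m + s)); destruct (Nat.ltb_spec (m + s) (a + 0)); simpl; auto; lia.
  - rewrite sum_n_ext with (b := fun m => ind (Nat.eqb (m + s) a) + ind (andb (Nat.leb (S a) (m + s)) (Nat.ltb (m + s) (S a + N)))).
    + rewrite (sum_n_plus (G:=R_AbelianMonoid)). change plus with Rplus. rewrite S_INR.
      pose proof (count_one a s L). specialize (IHN (S a)). lra.
    + intro m. unfold ind. destruct (Nat.eqb_spec (m + s) a); destruct (Nat.leb_spec a (m + s));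
      destruct (Nat.ltb_spec (m + s) (a + S N)); destruct (Nat.leb_spec (S a) (m + s));
      destruct (Nat.ltb_spec (m + s) (S a + N)); simpl; try lia; ring.
Qed.

Lemma geom_sum (k0 : nat) I :
  @eq R (sum_n (fun i => if Nat.leb k0 i then (/2) ^ i else 0) I)
  (if Nat.leb k0 I then 2 * (/2) ^ k0 - 2 * (/2) ^ (S I) else 0).
Proof.
  induction I.
  - rewrite sum_O. destruct (Nat.leb_spec k0 0); auto. assert (k0 = 0%nat) by lia. subst. simpl. field.
  - rewrite sum_Sn, IHI. change plus with Rplus.
    destruct (Nat.leb_spec k0 I); destruct (Nat.leb_spec k0 (S I)); try lia.
    + simpl. field.
    + assert (k0 = S I) by lia. subst. simpl. field.
    + ring.
Qed.

Lemma geom_sum_le (k0 : nat) I : sum_n (fun i => if Nat.leb k0 i then (/2) ^ i else 0) I <= 2 * (/2) ^ k0.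
Proof.
  rewrite geom_sum. assert (0 < (/2) ^ k0) by (apply pow_lt; lra).
  assert (0 < (/2) ^ (S I)) by (apply pow_lt; lra). destruct (Nat.leb k0 I); lra.
Qed.

Lemma sum_n_le_compat (f g : nat -> R) L : (forall m, f m <= g m) -> sum_n f L <= sum_n g L.
Proof.
  intros h. induction L. rewrite !sum_O; auto. rewrite !sum_Sn. change plus with Rplus.
  specialize (h (S L)). lra.
Qed.

Lemma sum_n_nonneg (f : nat -> R) L : (forall m, 0 <= f m) -> 0 <= sum_n f L.
Proof.
  intros h. induction L. rewrite !sum_O; auto. rewrite !sum_Sn. change plus with Rplus.
  specialize (h (S L)). lra.
Qed.

Lemma block_sum (h : nat -> R) (nb Nb : nat -> nat) s k0 :
  (forall i, (i <= nb i)%nat) ->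
  (forall m, 0 <= h m) ->
  (forall m, h m = 0 \/ exists i, (k0 <= i)%nat /\ (nb i <= m + s < nb i + Nb i)%nat /\
        h m <= (/2) ^ i / INR (Nb i)) ->
  ex_series h /\ Series h <= 2 * (/2) ^ k0.
Proof.
  intros hnb hpos hh. apply series_pos_bounded; auto. intro L.
  set (g := fun i m => if andb (Nat.leb k0 i) (andb (Nat.leb (nb i) (m + s)) (Nat.ltb (m + s) (nb i + Nb i)))
                       then (/2) ^ i / INR (Nb i) else 0).
  assert (hg0 : forall i m, 0 <= g i m).
  { intros i m. unfold g. destruct (Nat.leb_spec k0 i); destruct (Nat.leb_spec (nb i) (m + s));
      destruct (Nat.ltb_spec (m + s) (nb i + Nb i)); simpl; try lra.
    apply Rdiv_le_0_compat. apply pow_le; lra. apply lt_0_INR; lia. }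
  assert (h1 : forall m, h m <= sum_n (fun i => g i m) (m + s)).
  { intro m. destruct (hh m) as [e|[i [hi [hb hle]]]].
    - rewrite e. apply sum_n_nonneg. intro; apply hg0.
    - eapply Rle_trans; [|apply (sum_le_fin (fun i => g i m) (m + s) i)].
      + unfold g. destruct (Nat.leb_spec k0 i); destruct (Nat.leb_spec (nb i) (m + s));
        destruct (Nat.ltb_spec (m + s) (nb i + Nb i)); simpl; try lia. auto.
      + intro; apply hg0.
      + specialize (hnb i). lia. }
  assert (h2 : forall m, (m <= L)%nat -> sum_n (fun i => g i m) (m + s) = sum_n (fun i => g i m) (L + s)).
  { intros m hm. induction hm. auto. rewrite IHhm. rewrite Nat.add_succ_l, sum_Sn.
    assert (e : g (S (m0 + s)) m = 0).
    { unfold g. specialize (hnb (S (m0 + s))). destruct (Nat.leb_spec (nb (S (m0 + s))) (m + s)); [lia|].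
      rewrite Bool.andb_false_l, Bool.andb_false_r. auto. }
    rewrite e. change plus with Rplus. symmetry; apply Rplus_0_r. }
  apply Rle_trans with (sum_n (fun m => sum_n (fun i => g i m) (L + s)) L).
  { apply Rle_trans with (sum_n (fun m => sum_n (fun i => g i m) (m + s)) L).
    - apply sum_n_le_compat; auto.
    - right. apply sum_n_ext_loc. auto. }
  rewrite (sum_n_switch (G:=R_AbelianMonoid) (fun m i => g i m)).
  eapply Rle_trans; [|apply (geom_sum_le k0 (L + s))].
  apply sum_n_le_compat. intro i. unfold g.
  destruct (Nat.leb_spec k0 i); simpl.
  - destruct (Nat.eq_dec (Nb i) 0) as [e|ne].
    + rewrite sum_n_ext with (b := fun _ => 0). rewrite sum_n_const. apply Rle_trans with 0. right; ring. apply pow_le; lra.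
      intro m. destruct (Nat.leb_spec (nb i) (m + s)); destruct (Nat.ltb_spec (m + s) (nb i + Nb i)); simpl; auto; lia.
    + rewrite sum_n_ext with (b := fun m => ind (andb (Nat.leb (nb i) (m + s)) (Nat.ltb (m + s) (nb i + Nb i))) * ((/2) ^ i / INR (Nb i))).
      * rewrite (sum_n_mult_r (K:=R_Ring)). change mult with Rmult.
        pose proof (count_block (Nb i) (nb i) s L).
        assert (0 < INR (Nb i)) by (apply lt_0_INR; lia).
        apply Rle_trans with (INR (Nb i) * ((/ 2) ^ i / INR (Nb i))).
        apply Rmult_le_compat_r. apply Rdiv_le_0_compat. apply pow_le; lra. auto. auto.
        right. field. lra.
      * intro m. unfold ind. destruct (andb _ _); simpl; [rewrite Rmult_1_l | rewrite Rmult_0_l]; reflexivity.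
  - rewrite sum_n_const. right; ring.
Qed.

Definition dig (c j : nat) : nat := fst (Cantor.of_nat (Nat.iter j (fun c => snd (Cantor.of_nat c)) c)).
Definition decC (d t : nat) : C :=
  let '(p1, r1) := Cantor.of_nat t in let '(p2, r2) := Cantor.of_nat r1 in let '(p3, p4) := Cantor.of_nat r2 in
  ((INR p1 - INR p2) / (INR d + 1), (INR p3 - INR p4) / (INR d + 1)).
Definition zc (d c : nat) (j : nat) : C := decC d (dig c j).

Lemma decC_0 d : decC d 0 = 0%C.
Proof. unfold decC. simpl. unfold RtoC. f_equal; unfold Rdiv; ring. Qed.

Lemma code_exists (s : nat -> nat) N : (forall j, (N <= j)%nat -> s j = 0%nat) ->
  exists c, forall j, dig c j = s j.
Proof.
  revert s; induction N; intros s hs.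
  - exists 0%nat. intro j. rewrite hs by lia. unfold dig.
    assert (Nat.iter j (fun c => snd (Cantor.of_nat c)) 0%nat = 0%nat).
    { induction j. auto. simpl. rewrite IHj. reflexivity. }
    rewrite H. reflexivity.
  - destruct (IHN (fun j => s (S j))) as [c hc]. intros; apply hs; lia.
    exists (Cantor.to_nat (s 0%nat, c)). intro j. destruct j.
    + change (fst (Cantor.of_nat (Cantor.to_nat (s 0%nat, c))) = s 0%nat). rewrite cancel_of_to. reflexivity.
    + unfold dig. rewrite Nat.iter_succ_r. rewrite cancel_of_to. simpl snd. apply hc.
Qed.

Lemma real_approx (X : R) (d : nat) : exists p1 p2 : nat,
  Rabs ((INR p1 - INR p2) / (INR d + 1) - X) <= 1 / (INR d + 1).
Proof.
  assert (hd : 0 < INR d + 1) by (pose proof (pos_INR d); lra).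
  set (k := (up (X * (INR d + 1)) - 1)%Z).
  destruct (archimed (X * (INR d + 1))) as [h1 h2].
  exists (Z.to_nat k), (Z.to_nat (- k)).
  assert (e : INR (Z.to_nat k) - INR (Z.to_nat (- k)) = IZR k).
  { rewrite !INR_IZR_INZ. destruct (Z.le_gt_cases 0 k).
    - rewrite Z2Nat.id by lia. replace (Z.to_nat (-k)) with 0%nat by lia. simpl. ring.
    - replace (Z.to_nat k) with 0%nat by lia. rewrite Z2Nat.id by lia. rewrite opp_IZR. simpl. ring. }
  rewrite e. unfold k. rewrite minus_IZR.
  replace ((IZR (up (X * (INR d + 1))) - 1) / (INR d + 1) - X) with ((IZR (up (X * (INR d + 1))) - 1 - X * (INR d + 1)) / (INR d + 1)) by (field; lra).
  unfold Rdiv. rewrite Rabs_mult, Rabs_inv, (Rabs_pos_eq (INR d + 1)) by lra.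
  apply Rmult_le_compat_r. left; apply Rinv_0_lt_compat; lra.
  apply Rabs_le. lra.
Qed.

Lemma dec_surj (d : nat) (x : C) : exists t, Cmod (decC d t - x) <= 2 / (INR d + 1).
Proof.
  assert (hd : 0 < INR d + 1) by (pose proof (pos_INR d); lra).
  destruct x as [x1 x2].
  destruct (real_approx x1 d) as [p1 [p2 h1]]. destruct (real_approx x2 d) as [p3 [p4 h2]].
  exists (Cantor.to_nat (p1, Cantor.to_nat (p2, Cantor.to_nat (p3, p4)))).
  unfold decC. rewrite !cancel_of_to.
  eapply Rle_trans. apply Cmod_2Rmax. simpl.
  assert (sqrt 2 <= 2). { rewrite <- (sqrt_square 2) at 2 by lra. apply sqrt_le_1_alt. lra. }
  assert (Rmax (Rabs ((INR p1 - INR p2) / (INR d + 1) + - x1)) (Rabs ((INR p3 - INR p4) / (INR d + 1) + - x2)) <= 1 / (INR d + 1)).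
  { apply Rmax_lub; auto. }
  assert (0 <= Rmax (Rabs ((INR p1 - INR p2) / (INR d + 1) + - x1)) (Rabs ((INR p3 - INR p4) / (INR d + 1) + - x2))).
  { eapply Rle_trans; [|apply Rmax_l]. apply Rabs_pos. }
  apply Rle_trans with (2 * Rmax (Rabs ((INR p1 - INR p2) / (INR d + 1) + - x1)) (Rabs ((INR p3 - INR p4) / (INR d + 1) + - x2))).
  apply Rmult_le_compat_r; auto. unfold Rdiv in *. lra.
Qed.

Lemma fin_series (f : nat -> R) N B : (forall j, (N <= j)%nat -> f j = 0) -> (forall j, 0 <= f j <= B) ->
  ex_series f /\ Series f <= INR N * B.
Proof.
  intros h0 hb. apply series_pos_bounded. intro; apply hb.
  assert (hB : 0 <= B) by (destruct (hb 0%nat); lra).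
  intro L. assert (forall L, sum_n f L <= INR (Nat.min (S L) N) * B).
  { induction L0.
    - rewrite sum_O. destruct N; simpl Nat.min; [rewrite h0 by lia; simpl; lra| simpl; destruct (hb 0%nat); lra].
    - rewrite sum_Sn. change plus with Rplus. destruct (Nat.lt_ge_cases (S L0) N).
      + rewrite Nat.min_l in IHL0 by lia. rewrite Nat.min_l by lia. rewrite (S_INR (S L0)). destruct (hb (S L0)). lra.
      + rewrite h0 by lia. rewrite Nat.min_r in * by lia. lra. }
  eapply Rle_trans. apply H. apply Rmult_le_compat_r; auto. apply le_INR. lia.
Qed.

Definition trunc (v : nat -> C) N j : C := if Nat.ltb j N then v j else 0%C.

Fixpoint backf (a b v : nat -> C) (f j : nat) : C :=
  match f with O => 0%C | S f' => (v j - beta a b (S j) * backf a b v f' (S j))%C end.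
Definition zb (a b v : nat -> C) N j := backf a b v (N - j) j.

Lemma Jt_zb (a b v : nat -> C) N j : Jt a b (zb a b v N) j = trunc v N j.
Proof.
  unfold Jt, zb, trunc. destruct (Nat.ltb_spec j N).
  - replace (N - j)%nat with (S (N - S j)) by lia. simpl. ring.
  - replace (N - j)%nat with 0%nat by lia. replace (N - S j)%nat with 0%nat by lia. simpl. ring.
Qed.

Lemma tail_small q (v : nat -> C) eta : in_lq q v -> 0 < eta ->
  exists N, Sq q (fun j => trunc v N j - v j)%C < eta.
Proof.
  intros hv he. set (f := fun j => rpow (Cmod (v j)) q).
  assert (hs : is_lim_seq (sum_n f) (Series f)) by (apply is_series_R_iff; apply Series_correct; exact hv). apply is_lim_seq_spec in hs.
  destruct (hs (mkposreal eta he)) as [N0 hN0]. simpl in hN0.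
  exists (S N0). unfold Sq.
  rewrite (Series_ext _ (fun j => if Nat.ltb j (S N0) then 0 else f j)).
  2:{ intro j. unfold trunc, f. destruct (Nat.ltb_spec j (S N0)).
      assert (e : (v j - v j)%C = RtoC 0) by ring. rewrite e, Cmod_0; apply rpow_0.
      assert (e : (RtoC 0 - v j)%C = (- v j)%C) by ring. rewrite e, Cmod_opp. auto. }
  rewrite (Series_incr_n_aux _ (S N0)).
  2:{ intros k hk. destruct (Nat.ltb_spec k (S N0)); [auto|lia]. }
  rewrite (Series_ext _ (fun k => f (S N0 + k)%nat)).
  2:{ intro k. destruct (Nat.ltb_spec (S N0 + k) (S N0)); [lia|auto]. }
  pose proof (Series_incr_n f (S N0) ltac:(lia) hv) as e. simpl pred in e.
  rewrite <- sum_n_Reals in e. specialize (hN0 N0 (le_n _)).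
  assert (Series (fun k => f (S N0 + k)%nat) = Series f - sum_n f N0) by (change (Series f = sum_n f N0 + Series (fun k => f (S N0 + k)%nat)) in e; lra).
  rewrite H. unfold f in *. rewrite Rabs_minus_sym in hN0. apply Rabs_lt_between in hN0. lra.
Qed.

Lemma density (a b : nat -> C) q Bb : 0 < q -> 0 <= Bb -> (forall k, Cmod (beta a b k) <= Bb) ->
  forall v, in_lq q v -> forall eta, 0 < eta ->
  exists d c N, (forall j, (N <= j)%nat -> dig c j = 0%nat) /\
    in_lq q (fun j => Jt a b (zc d c) j - v j)%C /\ Sq q (fun j => Jt a b (zc d c) j - v j)%C < eta.
Proof.
  intros hq hB0 hB v hv eta he.
  set (c2 := rpow 2 q). set (CJ := c2 * (1 + rpow Bb q)).
  assert (hc2 : 0 < c2) by (apply rpow_pos; lra).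
  assert (hCJ : 0 < CJ) by (unfold CJ; pose proof (rpow_ge0 Bb q); apply Rmult_lt_0_compat; lra).
  destruct (tail_small q v (eta / (2 * c2)) hv) as [N hN]. apply Rdiv_lt_0_compat; lra.
  set (w1 := fun j => (trunc v N j - v j)%C).
  assert (htr : in_lq q (trunc v N)).
  { apply ex_series_fin with N. intros k hk. unfold trunc. destruct (Nat.ltb_spec k N); [lia|]. rewrite Cmod_0; apply rpow_0. }
  destruct (lq_minus q _ _ (Rlt_le _ _ hq) htr hv) as [hw1 _].
  set (rho0 := eta / (2 * c2 * CJ * (INR N + 1))).
  assert (hrho0 : 0 < rho0). { unfold rho0. apply Rdiv_lt_0_compat. lra. pose proof (pos_INR N).
    apply Rmult_lt_0_compat. apply Rmult_lt_0_compat; lra. lra. }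
  set (rho := rpow rho0 (/ q)).
  assert (hrho : 0 < rho) by (apply rpow_pos; auto).
  assert (hrq : rpow rho q = rho0) by (apply rpow_inv'; lra).
  set (d := Z.to_nat (up (2 / rho))).
  assert (hd : 2 / (INR d + 1) <= rho).
  { destruct (archimed (2 / rho)) as [h1 h2].
    assert (0 < 2 / rho) by (apply Rdiv_lt_0_compat; lra).
    assert (IZR (up (2 / rho)) <= INR d).
    { unfold d. rewrite INR_IZR_INZ. rewrite Z2Nat.id. lra. apply le_IZR. lra. }
    assert (0 < INR d + 1) by (pose proof (pos_INR d); lra).
    apply Rmult_le_reg_r with (INR d + 1). auto. unfold Rdiv. rewrite Rmult_assoc, Rinv_l by lra.
    assert (2 = rho * (2 / rho)) by (field; lra).
    assert (rho * (2 / rho) <= rho * INR d) by (apply Rmult_le_compat_l; lra).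
    lra. }
  assert (H4 : forall j, exists t, ((j < N)%nat -> Cmod (decC d t - zb a b v N j) <= rho) /\ ((N <= j)%nat -> t = 0%nat)).
  { intro j. destruct (Nat.lt_ge_cases j N).
    - destruct (dec_surj d (zb a b v N j)) as [t ht]. exists t. split; intro; [lra|lia].
    - exists 0%nat. split; intro; [lia|auto]. }
  set (s := fun j => proj1_sig (constructive_indefinite_description _ (H4 j))).
  assert (hs : forall j, ((j < N)%nat -> Cmod (decC d (s j) - zb a b v N j) <= rho) /\ ((N <= j)%nat -> s j = 0%nat)).
  { intro j. unfold s. destruct (constructive_indefinite_description _ (H4 j)). simpl. auto. }
  destruct (code_exists s N) as [c hc]. intros j hj; apply hs; auto.
  exists d, c, N. split. intros j hj. rewrite hc. apply hs; auto.
  set (e := fun j => (zc d c j - zb a b v N j)%C).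
  assert (he0 : forall j, rpow (Cmod (e j)) q <= rho0).
  { intro j. unfold e, zc. rewrite hc. destruct (Nat.lt_ge_cases j N).
    - rewrite <- hrq. apply rpow_le. lra. split. apply Cmod_ge_0. apply hs; auto.
    - rewrite (proj2 (hs j)) by auto. rewrite decC_0. unfold zb. replace (N - j)%nat with 0%nat by lia. simpl.
      assert (ee : (RtoC 0 - RtoC 0)%C = RtoC 0) by ring. rewrite ee, Cmod_0, rpow_0. lra. }
  destruct (fin_series (fun j => rpow (Cmod (e j)) q) N rho0) as [hex hS].
  { intros j hj. unfold e, zc. rewrite hc, (proj2 (hs j)) by auto. rewrite decC_0. unfold zb. replace (N - j)%nat with 0%nat by lia. simpl.
    assert (ee : (RtoC 0 - RtoC 0)%C = RtoC 0) by ring. rewrite ee, Cmod_0, rpow_0. auto. }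
  { intro j. split. apply rpow_ge0. auto. }
  destruct (Jt_lq a b e q Bb (Rlt_le _ _ hq) hB0 hB hex) as [hJe hJS].
  destruct (lq_plus q _ _ (Rlt_le _ _ hq) hJe hw1) as [hp1 hp2].
  assert (eqf : (fun j => Jt a b (zc d c) j - v j)%C = (fun n => Jt a b e n + w1 n)%C).
  { apply functional_extensionality. intro j. unfold w1. rewrite <- (Jt_zb a b v N j). unfold Jt, e. ring. }
  rewrite eqf. split. auto.
  eapply Rle_lt_trans. exact hp2. fold c2. fold CJ in hJS.
  assert (Sq q w1 < eta / (2 * c2)) by exact hN.
  assert (Sq q e <= INR N * rho0) by exact hS.
  assert (CJ * (INR N * rho0) < eta / (2 * c2)).
  { unfold rho0. pose proof (pos_INR N).
    replace (CJ * (INR N * (eta / (2 * c2 * CJ * (INR N + 1))))) with ((eta / (2 * c2)) * (INR N / (INR N + 1))) by (field; lra).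
    rewrite <- (Rmult_1_r (eta / (2 * c2))) at 2. apply Rmult_lt_compat_l. apply Rdiv_lt_0_compat; lra.
    apply Rmult_lt_reg_r with (INR N + 1). lra. unfold Rdiv. rewrite Rmult_assoc, Rinv_l by lra. lra. }
  assert (Sq q (Jt a b e) < eta / (2 * c2)).
  { eapply Rle_lt_trans. exact hJS. eapply Rle_lt_trans; [|exact H1]. apply Rmult_le_compat_l; lra. }
  apply Rlt_le_trans with (c2 * (eta / (2 * c2) + eta / (2 * c2))).
  apply Rmult_lt_compat_l; auto. lra. right. field. lra.
Qed.

Definition Nb (i : nat) : nat := S i.
Definition codeE (i : nat) : nat * nat := Cantor.of_nat (fst (Cantor.of_nat i)).
Definition E (i j : nat) : C := if Nat.leb j i then zc (fst (codeE i)) (snd (codeE i)) j else 0%C.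
Definition Ab (i : nat) : R := sum_n (fun j => Cmod (E i j)) i.
Definition th (q : R) (i : nat) : R := rpow ((/2) ^ i / INR (Nb i)) (/ q).
Definition Kb (q M : R) (i prev : nat) : R := M ^ (2 * Nb i + prev) * Ab i / th q i.
Fixpoint nb (ch : R -> nat -> nat) (q M : R) (i : nat) : nat :=
  match i with
  | O => (ch (Kb q M 0 0) (Nb 0) - Nb 0)%nat
  | S i' => (ch (Kb q M (S i') (nb ch q M i')) (nb ch q M i' + Nb i' + Nb (S i')) - Nb (S i'))%nat
  end.
Definition prevn ch q M (i : nat) : nat := match i with O => O | S i' => nb ch q M i' end.

Lemma E_zero i j : (i < j)%nat -> E i j = 0%C.
Proof. intro h. unfold E. destruct (Nat.leb_spec j i); [lia|auto]. Qed.

Lemma E_bound i j : Cmod (E i j) <= Ab i.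
Proof.
  destruct (Nat.le_gt_cases j i).
  - apply (sum_le_fin (fun j => Cmod (E i j))); auto. intro; apply Cmod_ge_0.
  - rewrite E_zero by auto. rewrite Cmod_0. apply sum_n_nonneg. intro; apply Cmod_ge_0.
Qed.

Lemma th_pos q i : 0 < th q i.
Proof. unfold th. apply rpow_pos. unfold Nb. apply Rdiv_lt_0_compat. apply pow_lt; lra. apply lt_0_INR; lia. Qed.

Lemma th_q q i : 0 < q -> rpow (th q i) q = (/2) ^ i / INR (Nb i).
Proof.
  intro hq. unfold th. apply rpow_inv'. lra. unfold Nb. apply Rdiv_le_0_compat. apply pow_le; lra. apply lt_0_INR; lia.
Qed.


Definition chspec (a w : nat -> C) (ch : R -> nat -> nat) :=
  forall K m0, (m0 <= ch K m0)%nat /\ K < Cmod (Qp a w 0 (ch K m0)).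

Lemma nb_end a w ch q M i : chspec a w ch ->
  (nb ch q M i + Nb i = ch (Kb q M i (prevn ch q M i)) (match i with O => Nb 0 | S i' => nb ch q M i' + Nb i' + Nb (S i') end))%nat.
Proof.
  intros hch. destruct i; simpl nb; simpl prevn.
  - destruct (hch (Kb q M 0 0) (Nb 0)) as [h _]. lia.
  - destruct (hch (Kb q M (S i) (nb ch q M i)) (nb ch q M i + Nb i + Nb (S i))%nat) as [h _]. lia.
Qed.

Lemma nb_K a w ch q M i : chspec a w ch ->
  Kb q M i (prevn ch q M i) < Cmod (Qp a w 0 (nb ch q M i + Nb i)).
Proof. intros hch. rewrite (nb_end a w ch q M i hch). apply hch. Qed.

Lemma nb_step a w ch q M i : chspec a w ch -> (nb ch q M i + Nb i <= nb ch q M (S i))%nat.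
Proof.
  intros hch. simpl nb at 2.
  destruct (hch (Kb q M (S i) (nb ch q M i)) (nb ch q M i + Nb i + Nb (S i))%nat) as [h _]. lia.
Qed.

Lemma nb_mono a w ch q M k i : chspec a w ch -> (k < i)%nat -> (nb ch q M k + Nb k <= nb ch q M i)%nat.
Proof.
  intros hch h. induction h.
  - apply nb_step with a w; auto.
  - pose proof (nb_step a w ch q M m hch). unfold Nb in *. lia.
Qed.

Lemma nb_ge a w ch q M i : chspec a w ch -> (i <= nb ch q M i)%nat.
Proof.
  intros hch. induction i. lia. pose proof (nb_step a w ch q M i hch). unfold Nb in *. lia.
Qed.

Lemma prevn_ge a w ch q M k i : chspec a w ch -> (k < i)%nat -> (nb ch q M k <= prevn ch q M i)%nat.
Proof.
  intros hch h. destruct i. lia. simpl. destruct (Nat.eq_dec k i). subst; lia.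
  pose proof (nb_mono a w ch q M k i hch ltac:(lia)). lia.
Qed.

Lemma entry_bound (a w : nat -> C) ch q M i s j : 0 < q ->
  (forall k, a k <> 0%C) -> (forall k, w k <> 0%C) -> 1 <= M -> (forall n, Cmod (om a w n) <= M) ->
  chspec a w ch -> (s <= prevn ch q M i)%nat -> (s <= nb ch q M i)%nat -> (j < Nb i)%nat ->
  Cmod (E i j / Qp a w j (nb ch q M i - s)) <= th q i.
Proof.
  intros hq ha hw hM1 hM hch hs1 hs2 hj.
  set (L := (nb ch q M i - s)%nat). set (mI := (nb ch q M i + Nb i)%nat).
  pose proof (nb_K a w ch q M i hch) as hK. fold mI in hK.
  pose proof (Qp_add a w 0 j L) as e1. simpl in e1.
  pose proof (Qp_add a w 0 (j + L) (mI - (j + L))) as e2. simpl in e2.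
  replace (j + L + (mI - (j + L)))%nat with mI in e2 by (unfold mI, L; lia).
  rewrite e2, e1 in hK. rewrite !Cmod_mult in hK.
  pose proof (Qp_bound a w M 0 j hM) as b1. pose proof (Qp_bound a w M (j + L) (mI - (j + L)) hM) as b2.
  assert (b1' : M ^ j <= M ^ Nb i) by (apply Rle_pow; auto; lia).
  assert (b2' : M ^ (mI - (j + L)) <= M ^ (Nb i + prevn ch q M i)) by (apply Rle_pow; auto; unfold mI, L; lia).
  set (X := Cmod (Qp a w j L)).
  assert (hX : 0 <= X) by apply Cmod_ge_0.
  assert (hMp : 0 < M ^ (2 * Nb i + prevn ch q M i)) by (apply pow_lt; lra).
  assert (Kb q M i (prevn ch q M i) < M ^ (2 * Nb i + prevn ch q M i) * X).
  { eapply Rlt_le_trans. exact hK. fold X.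
    replace (2 * Nb i + prevn ch q M i)%nat with (Nb i + (Nb i + prevn ch q M i))%nat by lia.
    rewrite pow_add.
    pose proof (Cmod_ge_0 (Qp a w 0 j)). pose proof (Cmod_ge_0 (Qp a w (j + L) (mI - (j + L)))).
    apply Rle_trans with (M ^ Nb i * X * M ^ (Nb i + prevn ch q M i)).
    apply Rmult_le_compat. apply Rmult_le_pos; auto. auto.
    apply Rmult_le_compat_r; auto; lra. lra.
    right; ring. }
  unfold Kb in H. pose proof (th_pos q i) as hth.
  assert (hAX : Ab i < th q i * X).
  { unfold Rdiv in H. rewrite Rmult_assoc in H. apply Rmult_lt_reg_l in H; auto.
    apply Rmult_lt_reg_r with (/ th q i). apply Rinv_0_lt_compat; auto.
    replace (th q i * X * / th q i) with X by (field; lra). auto. }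
  assert (hXp : 0 < X).
  { destruct hX; auto. exfalso. rewrite <- H0 in hAX. rewrite Rmult_0_r in hAX.
    pose proof (sum_n_nonneg (fun j => Cmod (E i j)) i (fun _ => Cmod_ge_0 _)). unfold Ab in hAX. lra. }
  rewrite Cmod_div. fold X. apply Rmult_le_reg_r with X; auto. unfold Rdiv. rewrite Rmult_assoc, Rinv_l by lra.
  pose proof (E_bound i j). lra.
  apply Qp_nz; auto.
Qed.

Definition inblk ch q M i m : Prop := (nb ch q M i <= m < nb ch q M i + Nb i)%nat.

Definition ybuild (a w : nat -> C) ch q M (m : nat) : C :=
  sum_n (fun i => (if andb (Nat.leb (nb ch q M i) m) (Nat.ltb m (nb ch q M i + Nb i))
                  then (E i (m - nb ch q M i) / Qp a w (m - nb ch q M i) (nb ch q M i))%C else RtoC 0) : C) m.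

Lemma sum_one (g : nat -> C) k N : (forall i, i <> k -> g i = 0%C) -> (k <= N)%nat -> @eq C (sum_n g N) (g k).
Proof.
  intros hg hk.
  assert (h0 : forall N, (N < k)%nat -> @eq C (sum_n g N) 0%C).
  { induction N0; intro h. rewrite sum_O. apply hg; lia.
    rewrite sum_Sn, IHN0 by lia. rewrite (hg (S N0)) by lia. apply Cplus_0_l. }
  induction hk.
  - destruct k. rewrite sum_O; auto. rewrite sum_Sn, h0 by lia. apply Cplus_0_l.
  - rewrite sum_Sn, IHhk. rewrite (hg (S m)) by lia. apply Cplus_0_r.
Qed.

Lemma blk_unique a w ch q M i i' m : chspec a w ch -> inblk ch q M i m -> inblk ch q M i' m -> i = i'.
Proof.
  intros hch h1 h2. unfold inblk in *. destruct (Nat.lt_total i i') as [h|[h|h]]; auto.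
  - pose proof (nb_mono a w ch q M i i' hch h). lia.
  - pose proof (nb_mono a w ch q M i' i hch h). lia.
Qed.

Lemma y_in a w ch q M i m : chspec a w ch -> inblk ch q M i m ->
  ybuild a w ch q M m = (E i (m - nb ch q M i) / Qp a w (m - nb ch q M i) (nb ch q M i))%C.
Proof.
  intros hch hb. unfold ybuild. rewrite (sum_one _ i).
  - unfold inblk in hb. destruct (Nat.leb_spec (nb ch q M i) m); destruct (Nat.ltb_spec m (nb ch q M i + Nb i)); try lia. reflexivity.
  - intros i' hi'. destruct (Nat.leb_spec (nb ch q M i') m); destruct (Nat.ltb_spec m (nb ch q M i' + Nb i')); simpl; auto.
    exfalso. apply hi'. apply (blk_unique a w ch q M i' i m hch); [unfold inblk; lia | exact hb].
  - pose proof (nb_ge a w ch q M i hch). unfold inblk in hb. lia.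
Qed.

Lemma sum_zero (g : nat -> C) N : (forall i, g i = 0%C) -> @eq C (sum_n g N) 0%C.
Proof. intros h. induction N. rewrite sum_O; auto. rewrite sum_Sn, IHN, h. apply Cplus_0_l. Qed.

Lemma y_out a w ch q M m : (forall i, ~ inblk ch q M i m) -> ybuild a w ch q M m = 0%C.
Proof.
  intros h. unfold ybuild. apply sum_zero.
  intro i. destruct (Nat.leb_spec (nb ch q M i) m); destruct (Nat.ltb_spec m (nb ch q M i + Nb i)); simpl; auto.
  exfalso. apply (h i). unfold inblk. lia.
Qed.

Lemma y_lq (a w : nat -> C) ch q M : 0 < q ->
  (forall k, a k <> 0%C) -> (forall k, w k <> 0%C) -> 1 <= M -> (forall n, Cmod (om a w n) <= M) ->
  chspec a w ch -> in_lq q (ybuild a w ch q M) /\ Sq q (ybuild a w ch q M) <= 2 * (/2) ^ 0.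
Proof.
  intros hq ha hw hM1 hM hch.
  apply (block_sum _ (nb ch q M) Nb 0 0).
  - intro i; apply (nb_ge a w ch q M i hch).
  - intro; apply rpow_ge0.
  - intro m. destruct (Classical_Prop.classic (exists i, inblk ch q M i m)) as [[i hi]|hn].
    + right. exists i. split. lia. split. unfold inblk in hi. lia.
      rewrite (y_in a w ch q M i m hch hi). rewrite <- (th_q q i) by auto. apply rpow_le. lra. split. apply Cmod_ge_0.
      pose proof (entry_bound a w ch q M i 0 (m - nb ch q M i) hq ha hw hM1 hM hch ltac:(lia) ltac:(lia)) as hb.
      rewrite Nat.sub_0_r in hb. apply hb. unfold inblk in hi. lia.
    + left. rewrite y_out. rewrite Cmod_0; apply rpow_0. intros i hi; apply hn; eauto.
Qed.

Lemma x_lq (a w : nat -> C) ch q M k : 0 < q ->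
  (forall k, a k <> 0%C) -> (forall k, w k <> 0%C) -> 1 <= M -> (forall n, Cmod (om a w n) <= M) ->
  chspec a w ch ->
  in_lq q (fun m => Nat.iter (nb ch q M k) (Bw a w) (ybuild a w ch q M) m - E k m)%C /\
  Sq q (fun m => Nat.iter (nb ch q M k) (Bw a w) (ybuild a w ch q M) m - E k m)%C <= 2 * (/2) ^ (S k).
Proof.
  intros hq ha hw hM1 hM hch.
  set (s := nb ch q M k).
  apply (block_sum _ (nb ch q M) Nb s (S k)).
  - intro i; apply (nb_ge a w ch q M i hch).
  - intro; apply rpow_ge0.
  - intro m. rewrite iter_Bw.
    destruct (Classical_Prop.classic (exists i, inblk ch q M i (m + s))) as [[i hi]|hn].
    + rewrite (y_in a w ch q M i (m + s) hch hi).
      destruct (Nat.lt_total i k) as [hik|[hik|hik]].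
      * exfalso. pose proof (nb_mono a w ch q M i k hch hik). unfold inblk in hi. unfold s in *. lia.
      * subst i. left. unfold inblk in hi. fold s in hi |- *.
        replace (m + s - s)%nat with m by lia.
        assert (ee : (Qp a w m s * (E k m / Qp a w m s) - E k m)%C = RtoC 0).
        { field. apply Qp_nz; auto. }
        rewrite ee, Cmod_0. apply rpow_0.
      * right. exists i. split. lia. split. unfold inblk in hi. lia.
        pose proof (nb_mono a w ch q M k i hch hik) as hmono. fold s in hmono.
        unfold inblk in hi. fold s in hi |- *.
        rewrite (E_zero k m) by (unfold Nb in *; lia).
        set (j := (m + s - nb ch q M i)%nat).
        assert (hq1 : Qp a w j (nb ch q M i) = (Qp a w j (nb ch q M i - s) * Qp a w m s)%C).
        { replace (nb ch q M i) with (nb ch q M i - s + s)%nat at 1 by lia. rewrite Qp_add.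
          replace (j + (nb ch q M i - s))%nat with m by (unfold j; lia). reflexivity. }
        rewrite hq1.
        assert (ee : (Qp a w m s * (E i j / (Qp a w j (nb ch q M i - s) * Qp a w m s)) - RtoC 0)%C =
                     (E i j / Qp a w j (nb ch q M i - s))%C).
        { field. split; apply Qp_nz; auto. }
        rewrite ee. rewrite <- (th_q q i) by auto. apply rpow_le. lra. split. apply Cmod_ge_0.
        apply entry_bound; auto. apply prevn_ge with a w; auto. lia. unfold j. lia.
    + left. rewrite y_out. 
      * destruct (Nat.lt_ge_cases m (Nb k)).
        -- exfalso. apply hn. exists k. unfold inblk. unfold s. lia.
        -- rewrite E_zero by (unfold Nb in *; lia).
           assert (ee : (Qp a w m s * RtoC 0 - RtoC 0)%C = RtoC 0) by ring. rewrite ee, Cmod_0. apply rpow_0.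
      * intros i hi; apply hn; eauto.
Qed.

Lemma unb_from (a w : nat -> C) : (forall K, exists m, K < Cmod (Qp a w 0 m)) ->
  forall K m0, exists m, (m0 <= m)%nat /\ K < Cmod (Qp a w 0 m).
Proof.
  intros hu K m0. revert K. induction m0; intro K.
  - destruct (hu K) as [m hm]. exists m. split; auto; lia.
  - destruct (IHm0 (Rmax K (Cmod (Qp a w 0 m0)))) as [m [h1 h2]].
    exists m. split.
    + destruct (Nat.eq_dec m m0). subst. pose proof (Rmax_r K (Cmod (Qp a w 0 m0))). lra. lia.
    + pose proof (Rmax_l K (Cmod (Qp a w 0 m0))). lra.
Qed.

Lemma hyp_construct (a b w : nat -> C) q M Bb : 0 < q ->
  (forall k, a k <> 0%C) -> (forall k, w k <> 0%C) -> 1 <= M -> (forall n, Cmod (om a w n) <= M) ->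
  0 <= Bb -> (forall k, Cmod (beta a b k) <= Bb) ->
  (exists K, forall k, (K <= k)%nat -> Cmod (beta a b k) <= 1) ->
  (forall K, exists m, K < Cmod (Qp a w 0 m)) ->
  hypercyclic_lq q (Fw_adj a b w).
Proof.
  intros hq ha hw hM1 hM hB0 hB hK1 hunb.
  pose proof (unb_from a w hunb) as H1.
  set (ch := fun K m0 => proj1_sig (constructive_indefinite_description _ (H1 K m0))).
  assert (hch : chspec a w ch).
  { intros K m0. unfold ch. destruct (constructive_indefinite_description _ (H1 K m0)). simpl. auto. }
  set (y := ybuild a w ch q M).
  destruct (y_lq a w ch q M hq ha hw hM1 hM hch) as [hy _]. fold y in hy.
  assert (hy0 : tends0 y) by (intros e he; apply (lq_to0 q y hq hy e he)).
  destruct (Jt_lq a b y q Bb (Rlt_le _ _ hq) hB0 hB hy) as [hu _].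
  exists (Jt a b y). split. exact hu.
  intros v hv eps he.
  set (c2 := rpow 2 q). set (CJ := c2 * (1 + rpow Bb q)).
  assert (hc2 : 0 < c2) by (apply rpow_pos; lra).
  assert (hCJ : 0 < CJ) by (unfold CJ; pose proof (rpow_ge0 Bb q); apply Rmult_lt_0_compat; lra).
  set (delta := rpow eps q). assert (hd : 0 < delta) by (apply rpow_pos; auto).
  destruct (density a b q Bb hq hB0 hB v hv (delta / (4 * c2))) as [d [c [N [hdig [hin hS]]]]].
  { apply Rdiv_lt_0_compat; lra. }
  destruct (pow_lt_1_zero (/2) ltac:(rewrite Rabs_pos_eq; lra) (delta / (4 * c2 * CJ))) as [Ke hKe].
  { apply Rdiv_lt_0_compat. lra. apply Rmult_lt_0_compat; lra. }
  set (k := Cantor.to_nat (Cantor.to_nat (d, c), (N + Ke)%nat)).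
  assert (hk : (N + Ke <= k)%nat) by (unfold k; pose proof (to_nat_non_decreasing (Cantor.to_nat (d, c)) (N + Ke)); lia).
  assert (hcode : codeE k = (d, c)). { unfold codeE, k. rewrite cancel_of_to. change (Cantor.of_nat (Cantor.to_nat (d, c)) = (d, c)). apply cancel_of_to. }
  assert (hE : forall j, E k j = zc d c j).
  { intro j. unfold E. rewrite hcode. simpl. destruct (Nat.leb_spec j k); auto.
    unfold zc. rewrite hdig by lia. rewrite decC_0. auto. }
  exists (nb ch q M k).
  rewrite (iter_key a b w y M ha hK1 hM hy0).
  set (X := Nat.iter (nb ch q M k) (Bw a w) y).
  destruct (x_lq a w ch q M k hq ha hw hM1 hM hch) as [hx hxS]. fold y X in hx, hxS.
  assert (hX : in_lq q X) by (apply iterBw_lq with M; auto; lra).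
  destruct (Jt_lq a b X q Bb (Rlt_le _ _ hq) hB0 hB hX) as [hJX _].
  split. exact hJX.
  destruct (Jt_lq a b _ q Bb (Rlt_le _ _ hq) hB0 hB hx) as [hJx hJxS].
  destruct (lq_plus q _ _ (Rlt_le _ _ hq) hJx hin) as [hp1 hp2].
  assert (eqf : (fun n => Jt a b X n - v n)%C =
     (fun n => Jt a b (fun m => X m - E k m)%C n + (Jt a b (zc d c) n - v n))%C).
  { apply functional_extensionality. intro n. unfold Jt. rewrite !hE. ring. }
  rewrite eqf. apply lq_norm_lt; auto. fold delta.
  eapply Rle_lt_trans. exact hp2. fold c2. fold CJ in hJxS.
  specialize (hKe k ltac:(lia)). rewrite Rabs_pos_eq in hKe by (apply pow_le; lra).
  assert (Sq q (Jt a b (fun m => X m - E k m)%C) < delta / (4 * c2)).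
  { eapply Rle_lt_trans. exact hJxS.
    apply Rle_lt_trans with (CJ * (/2) ^ k).
    apply Rmult_le_compat_l. lra. eapply Rle_trans. exact hxS. simpl. lra.
    apply Rmult_lt_compat_l with (r := CJ) in hKe; auto.
    replace (CJ * (delta / (4 * c2 * CJ))) with (delta / (4 * c2)) in hKe by (field; lra). auto. }
  apply Rlt_le_trans with (c2 * (delta / (4 * c2) + delta / (4 * c2))).
  apply Rmult_lt_compat_l; auto. lra.
  assert (c2 * (delta / (4 * c2) + delta / (4 * c2)) = delta / 2) by (field; lra). lra.
Qed.


Open Scope C_scope.

Theorem mainTheorem11 (a b w : nat -> C) (p q : R)
  (ha : forall n, a n <> 0) (hb : forall n, b n <> 0) (hw : forall n, w n <> 0)
  (hR : Rbar_lt (LimSup_seq (fun n => rpow (Cmod (a n) + Cmod (b n)) (/ INR n)))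
                p_infty)
  (hp : (1 < p)%R) (hpq : (/ p + / q = 1)%R)
  (hsup : exists M : R, forall n, (Cmod (w n * a n / a (S n)) <= M)%R)
  (hlim : Rbar_lt (LimSup_seq (fun n => Cmod (b n / a (S n)))) 1%R) :
  ~ hypercyclic_lq q (Fw_adj a b w)
  <->
  (forall u, in_lq q u -> forall n,
     is_lim_seq (fun nu => Cmod (Nat.iter nu (Fw_adj a b w) u n)) 0%R).
Proof.
  assert (hq : (0 < q)%R).
  { assert (h1 : (0 < / p < 1)%R). { split. apply Rinv_0_lt_compat; lra. rewrite <- Rinv_1. apply Rinv_lt_contravar; lra. }
    destruct (Rtotal_order q 0) as [h|[h|h]]; auto.
    - pose proof (Rinv_lt_0_compat q h). lra.
    - subst. rewrite Rinv_0 in hpq. lra. }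
  destruct hsup as [M0 hM0].
  set (M := Rmax 1 M0).
  assert (hM1 : (1 <= M)%R) by apply Rmax_l.
  assert (hM : forall n, (Cmod (om a w n) <= M)%R).
  { intro n. unfold om. eapply Rle_trans. apply hM0. apply Rmax_r. }
  pose proof (beta_ev a b hlim) as hK.
  destruct (beta_bounded a b hlim) as [Bb [hB0 hB]].
  assert (hK1 : exists K, forall k, (K <= k)%nat -> (Cmod (beta a b k) <= 1)%R).
  { destruct hK as [r [hr [K hKr]]]. exists K. intros k hk. specialize (hKr k hk). lra. }
  split.
  - intros hnot.
    destruct (classic (forall K, exists m, (K < Cmod (Qp a w 0 m))%R)) as [hu|hu].
    + exfalso. apply hnot. apply (hyp_construct a b w q M Bb); auto.
    + apply not_all_ex_not in hu. destruct hu as [Pm hPm].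
      apply (orbits_to0 a b w q M Pm); auto.
      intro m. destruct (Rle_lt_dec (Cmod (Qp a w 0 m)) Pm); auto. exfalso. apply hPm. exists m. auto.
  - apply not_hyp. auto.
Qed.
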